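(* Let $\tau=[0;\overline{b_1,b_2,\dots,b_s}]$ be a quadratic power series whose shortest periodic part is $b_1,\dots,b_s$. Let $f=[a_0;a_1,a_2,\dots]\in\widehat K\setminus(K\cup\Theta_\tau)$. For a positive integer $r$ with $a_r\ne b_s$, set $\alpha_r=[a_0;a_1,\dots,a_r,\overline{b_1,\dots,b_{s-1},b_s}]$, and write $\rho_r=\frac{|f-\alpha_r|}{|\alpha_r-\alpha_r^\sigma|}$. (i) If $a_{r+1}\ne b_1$, then $-\log_q\rho_r=\deg a_r+\deg b_s-\deg(a_r-b_s)+\deg a_{r+1}+\deg b_1-\deg(a_{r+1}-b_1).$ (ii) If $a_{r+1}=b_1$, let $t$ be the largest integer such that the word $a_{r+1}\cdots a_{r+t}$ coincides with the prefix of length $t$ of the infinite word $(b_1\cdots b_s)^\infty$; let $s_0\in\{1,\dots,s\}$ be such that $a_{r+t}=b_{s_0}$ is the $t$-th letter of this infinite word (i.e. $s_0\equiv t \bmod s$), and put $s'=s_0+1$ if $s_0<s$ and $s'=1$ otherwise. Then $-\log_q\rho_r=2\sum_{j=1}^t\deg a_{r+j}+\deg a_r+\deg b_s-\deg(a_r-b_s)+\deg a_{r+t+1}+\deg b_{s'}-\deg(a_{r+t+1}-b_{s'}).$ In particular, in both cases $\rho_r\le q^{-2}$. Furthermore, putting $t=0$ and $s'=1$ when $a_{r+1}\ne b_1$: if $\deg a_r\ne\deg b_s$ and $\deg a_{r+t+1}\ne\deg b_{s'}$, then $-\log_q\rho_r=2\sum_{j=1}^t\deg a_{r+j}+\min\{\deg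 a_r,\deg b_s\}+\min\{\deg a_{r+t+1},\deg b_{s'}\}.$
   Context: $q$ is a positive power of a prime, $R=\mathbb F_q[Y]$, $K=\mathbb F_q(Y)$, $\widehat K=\mathbb F_q((Y^{-1}))$ with absolute value $|P/Q|=q^{\deg P-\deg Q}$ extended to $\widehat K$ (the paper writes $\mathrm v(x)=-\log x/\log q$ for the corresponding valuation). $[a_0;a_1,a_2,\dots]$ denotes the continued fraction $a_0+1/(a_1+1/(a_2+\cdots))$ with $a_0\in R$ and $a_i$ ($i\ge1$) nonconstant polynomials; an overline indicates a block repeated infinitely often. For a quadratic power series $\gamma$, $\gamma^\sigma$ is its Galois conjugate over $K$, and $\Theta_\gamma=\mathrm{PGL}_2(R)\cdot\{\gamma,\gamma^\sigma\}$ under the action by homographies on $\widehat K\cup\{\infty\}$. *)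

(* Defs.v *)
(* The completion  Khat = F_q((Y^-1))  is built concretely as
   the type of coefficient functions  int -> F  (x n = coefficient of Y^n),
   elements of Khat being those with support bounded above. *)
From mathcomp Require Import all_boot all_order all_algebra.
From Stdlib Require Import ClassicalEpsilon.
Set Implicit Arguments.
Unset Strict Implicit.
Unset Printing Implicit Defensive.
Import Order.TTheory GRing.Theory Num.Theory.
Local Open Scope ring_scope.

Section LaurentSeries.
Variable F : fieldType.

Definition LS := int -> F.

Definition ls_bounded (x : LS) : Prop := exists N : int, forall n : int, N < n -> x n = 0.

Definition ls_top (x : LS) : int :=
  epsilon (inhabits 0) (fun N : int => forall n : int, N < n -> x n = 0).

(* degree of a nonzero element: |x| = q ^ ls_deg x, i.e. v(x) = - ls_deg x *)
Definition ls_deg (x : LS) : int :=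
  epsilon (inhabits 0) (fun d : int => x d != 0 /\ forall m : int, d < m -> x m = 0).

Definition ls_zero : LS := fun _ => 0.
Definition ls_add (x y : LS) : LS := fun n => x n + y n.
Definition ls_opp (x : LS) : LS := fun n => - x n.
Definition ls_sub (x y : LS) : LS := fun n => x n - y n.

(* Cauchy product: all nonzero terms x i * y j, i + j = n, have
   n - top y <= i <= top x *)
Definition ls_mul (x y : LS) : LS := fun n =>
  \sum_(k < `|(ls_top x + ls_top y - n)%R|%N.+1)
     x (ls_top x - k%:Z) * y (n - ls_top x + k%:Z).

Definition ls_poly (p : {poly F}) : LS := fun n => if 0 <= n then p`_`|n|%N else 0.

(* coefficients w_0, ..., w_k of the inverse of the unit power series
   sum_k u k T^k *)
Fixpoint inv_coefs (u : nat -> F) (k : nat) : seq F :=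
  match k with
  | 0 => [:: (u 0%N)^-1]
  | k'.+1 => let s := inv_coefs u k' in
             rcons s (- (u 0%N)^-1 * \sum_(i < k'.+1) u i.+1 * nth 0 s (k' - i))
  end.

(* multiplicative inverse (ls_inv 0 = 0) *)
Definition ls_inv (x : LS) : LS :=
  let d := ls_deg x in
  let u := fun k : nat => x (d - k%:Z) in
  fun n => if n <= - d then nth 0 (inv_coefs u `|(- d - n)%R|%N) `|(- d - n)%R|%N else 0.

Definition ls_in_K (x : LS) : Prop :=
  exists P Q : {poly F}, Q != 0 /\ ls_mul x (ls_poly Q) = ls_poly P.

Fixpoint cf_fin (l : seq {poly F}) : LS :=
  match l with
  | [::] => ls_zero
  | a :: l' => if l' is [::] then ls_poly a else ls_add (ls_poly a) (ls_inv (cf_fin l'))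
  end.

Definition cf_conv (c : nat -> {poly F}) (n : nat) : LS := cf_fin (mkseq c n.+1).

Definition is_cf (c : nat -> {poly F}) (x : LS) : Prop :=
  (forall i : nat, (0 < i)%N -> (1 < size (c i))%N) /\
  forall M : int, exists N : nat, forall n : nat, (N <= n)%N ->
    forall m : int, M <= m -> ls_sub x (cf_conv c n) m = 0.

Definition galois_conj (alpha beta : LS) : Prop :=
  ls_bounded beta /\ ~ ls_in_K alpha /\
  exists A B C : {poly F}, A != 0 /\
    ls_add (ls_add (ls_mul (ls_poly A) (ls_mul alpha alpha)) (ls_mul (ls_poly B) alpha))
           (ls_poly C) = ls_zero /\
    ls_add (ls_mul (ls_poly A) (ls_add alpha beta)) (ls_poly B) = ls_zero.

(* x = (A g + B) / (C g + D) with [A B; C D] in GL_2(R), the image not being oo *)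
Definition homography_image (A B C D : {poly F}) (g x : LS) : Prop :=
  size (A * D - B * C) = 1%N /\
  ls_add (ls_mul (ls_poly C) g) (ls_poly D) <> ls_zero /\
  x = ls_mul (ls_add (ls_mul (ls_poly A) g) (ls_poly B))
             (ls_inv (ls_add (ls_mul (ls_poly C) g) (ls_poly D))).

Definition in_Theta (gamma x : LS) : Prop :=
  exists g : LS, (g = gamma \/ galois_conj gamma g) /\
    exists A B C D : {poly F}, homography_image A B C D g x.

Definition pdeg (p : {poly F}) : int := ((size p).-1)%:Z.

(* letters of the word b = b_1 ... b_s (b_j = nth 0 b j.-1), and the j-th
   letter (j >= 1) of the infinite word (b_1 ... b_s)^oo *)
Definition bl (b : seq {poly F}) (j : nat) : {poly F} := nth 0 b j.-1.
Definition bper (b : seq {poly F}) (j : nat) : {poly F} := nth 0 b ((j.-1) %% size b).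

Definition tau_word (b : seq {poly F}) (i : nat) : {poly F} :=
  if i == 0%N then 0 else bper b i.

Definition alpha_word (a : nat -> {poly F}) (b : seq {poly F}) (r i : nat) : {poly F} :=
  if (i <= r)%N then a i else bper b (i - r).

Definition sprime (s t : nat) : nat :=
  let s0 := (((t.-1) %% s).+1)%N in if (s0 < s)%N then s0.+1 else 1%N.

End LaurentSeries.

(* Main.v *)
From HB Require Import structures.
Require Import Defs.
From mathcomp Require Import all_boot all_order all_algebra.
From mathcomp Require Import zify ring.
From mathcomp Require Import boolp.
From Stdlib Require Import ClassicalEpsilon ProofIrrelevance Classical_Prop.
Set Implicit Arguments.
Unset Strict Implicit.
Unset Printing Implicit Defensive.
Import Order.TTheory GRing.Theory Num.Theory.
Local Open Scope ring_scope.

Section Ser.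
Variable F : fieldType.

Definition pmul (a b : nat -> F) (k : nat) : F :=
  \sum_(i < k.+1) a i * b (k - i)%N.
Definition trp (a : nat -> F) (k : nat) : {poly F} := \poly_(i < k.+1) a i.

Lemma pmulE a b k : pmul a b k = (trp a k * trp b k)`_k.
Proof.
rewrite coefM /pmul; apply: eq_bigr => i _.
rewrite !coef_poly ltnS (leq_ord i) ltnS leq_subr //.
Qed.

Lemma trpM_coef a b k j : (j <= k)%N -> (trp a k * trp b k)`_j = pmul a b j.
Proof.
move=> hj; rewrite coefM /pmul; apply: eq_bigr => i _.
have hi : (i <= k)%N by apply: leq_trans hj; rewrite -ltnS.
rewrite !coef_poly ltnS hi ltnS (leq_trans (leq_subr _ _) hj) //.
Qed.

Lemma coefM_eql (p p' q : {poly F}) k :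
  (forall j, (j <= k)%N -> p`_j = p'`_j) -> (p * q)`_k = (p' * q)`_k.
Proof.
move=> h; rewrite !coefM; apply: eq_bigr => i _; rewrite h //.
by rewrite -ltnS.
Qed.

Lemma trp_coef a k j : (j <= k)%N -> (trp a k)`_j = a j.
Proof. by move=> hj; rewrite coef_poly ltnS hj. Qed.

Lemma pmulC a b k : pmul a b k = pmul b a k.
Proof. by rewrite !pmulE mulrC. Qed.

Lemma pmul_ext a a' b b' k : (forall j, a j = a' j) -> (forall j, b j = b' j) ->
  pmul a b k = pmul a' b' k.
Proof. by move=> ha hb; apply: eq_bigr => i _; rewrite ha hb. Qed.

Lemma pmulA a b c k : pmul (pmul a b) c k = pmul a (pmul b c) k.
Proof.
have e1 : (trp (pmul a b) k * trp c k)`_k = ((trp a k * trp b k) * trp c k)`_k.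
  by apply: coefM_eql => j hj; rewrite trp_coef // trpM_coef.
have e2 : (trp (pmul b c) k * trp a k)`_k = ((trp b k * trp c k) * trp a k)`_k.
  by apply: coefM_eql => j hj; rewrite trp_coef // trpM_coef.
rewrite !pmulE e1 (mulrC (trp a k) (trp (pmul b c) k)) e2 (mulrC _ (trp a k)) mulrA //.
Qed.

Lemma pmulDl a a' b k : pmul (fun j => a j + a' j) b k = pmul a b k + pmul a' b k.
Proof. by rewrite /pmul -big_split /=; apply: eq_bigr => i _; rewrite mulrDl. Qed.

Lemma pmul_delta b k : pmul (fun j => if j == 0%N then 1 else 0) b k = b k.
Proof.
rewrite /pmul big_ord_recl /= mul1r subn0 big1 ?addr0 // => i _.
by rewrite mul0r.
Qed.

Lemma pmul_cdelta c b k : pmul (fun j => if j == 0%N then c else 0) b k = c * b k.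
Proof.
rewrite /pmul big_ord_recl /= subn0 big1 ?addr0 // => i _.
by rewrite mul0r.
Qed.

Lemma pmul_shift a b k : a 0%N = 0 ->
  pmul a b k.+1 = pmul (fun j => a j.+1) b k.
Proof.
move=> a0; rewrite /pmul big_ord_recl /= a0 mul0r add0r.
by apply: eq_bigr => i _.
Qed.

Lemma pmul_0 a b : a 0%N = 0 -> pmul a b 0 = 0.
Proof. by move=> a0; rewrite /pmul big_ord_recl big_ord0 a0 mul0r addr0. Qed.

Definition bnd (x : LS F) (N : int) := forall n : int, N < n -> x n = 0.

Lemma bnd_mono x N N' : N <= N' -> bnd x N -> bnd x N'.
Proof. by move=> hN h n hn; apply: h; apply: le_lt_trans hn. Qed.

Lemma bnd_bounded x N : bnd x N -> ls_bounded x.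
Proof. by move=> h; exists N. Qed.

Lemma top_bnd x : ls_bounded x -> bnd x (ls_top x).
Proof. by move=> h; rewrite /ls_top; exact: (epsilon_spec (inhabits 0) _ h). Qed.

Definition ser (x : LS F) (N : int) (k : nat) : F := x (N - k%:Z).

Definition Em (x y : LS F) (Nx Ny : int) (n : int) : F :=
  if n <= Nx + Ny then pmul (ser x Nx) (ser y Ny) `|(Nx + Ny - n)%R|%N else 0.

Lemma ls_mul_Em x y : ls_bounded x -> ls_bounded y ->
  forall n, ls_mul x y n = Em x y (ls_top x) (ls_top y) n.
Proof.
move=> bx byy n; have hx := top_bnd bx; have hy := top_bnd byy.
rewrite /ls_mul /Em /pmul /ser; case: ifP => hn.
  apply: eq_bigr => i _; congr (_ * y _).
  have := ltn_ord i; rewrite ltnS => hi. lia.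
rewrite big1 // => i _; rewrite hy ?mulr0 //.
move: hn; rewrite leNgt => /negbFE hn. lia.
Qed.

Lemma Em_sym x y Nx Ny n : Em x y Nx Ny n = Em y x Ny Nx n.
Proof. by rewrite /Em addrC pmulC. Qed.

Lemma Em_shift x y Nx Ny n : bnd x Nx -> Em x y (Nx + 1) Ny n = Em x y Nx Ny n.
Proof.
move=> hx; rewrite /Em.
have s0 : ser x (Nx + 1) 0 = 0 by rewrite /ser hx //; lia.
case: (ltrgtP n (Nx + Ny + 1)) => h.
- have h1 : n <= Nx + 1 + Ny by lia.
  have h2 : n <= Nx + Ny by lia.
  rewrite h1 h2.
  have -> : `|(Nx + 1 + Ny - n)%R|%N = (`|(Nx + Ny - n)%R|%N).+1 by lia.
  rewrite pmul_shift //; apply: pmul_ext => j //.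
  by rewrite /ser; congr x; lia.
- have h1 : ~~ (n <= Nx + 1 + Ny) by lia.
  have h2 : ~~ (n <= Nx + Ny) by lia.
  by rewrite (negbTE h1) (negbTE h2).
- have h1 : n <= Nx + 1 + Ny by lia.
  have h2 : ~~ (n <= Nx + Ny) by lia.
  rewrite h1 (negbTE h2).
  have -> : `|(Nx + 1 + Ny - n)%R|%N = 0%N by lia.
  by rewrite pmul_0.
Qed.

Lemma Em_shiftk x y Nx Ny (k : nat) n : bnd x Nx ->
  Em x y (Nx + k%:Z) Ny n = Em x y Nx Ny n.
Proof.
move=> hx; elim: k => [|k IH]; first by rewrite addr0.
have -> : Nx + k.+1%:Z = (Nx + k%:Z) + 1 by lia.
have hb : bnd x (Nx + k%:Z) by apply: (bnd_mono _ hx); lia.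
by rewrite Em_shift.
Qed.

Lemma Em_indepx x y Nx Nx' Ny n : bnd x Nx -> bnd x Nx' ->
  Em x y Nx Ny n = Em x y Nx' Ny n.
Proof.
move=> h h'.
wlog le : Nx Nx' h h' / Nx <= Nx'.
  move=> W; case: (lerP Nx Nx') => hh; first exact: W.
  by symmetry; apply: W => //; apply: ltW.
have -> : Nx' = Nx + (`|(Nx' - Nx)%R|%N)%:Z by lia.
by rewrite Em_shiftk.
Qed.

Lemma Em_indep x y Nx Nx' Ny Ny' n : bnd x Nx -> bnd x Nx' ->
  bnd y Ny -> bnd y Ny' -> Em x y Nx Ny n = Em x y Nx' Ny' n.
Proof.
move=> hx hx' hy hy'; rewrite (@Em_indepx x y Nx Nx' Ny n hx hx') Em_sym.
by rewrite (@Em_indepx y x Ny Ny' Nx' n hy hy') Em_sym.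
Qed.

Lemma mul_Em x y Nx Ny : bnd x Nx -> bnd y Ny ->
  forall n, ls_mul x y n = Em x y Nx Ny n.
Proof.
move=> hx hy n; have bx := bnd_bounded hx; have byy := bnd_bounded hy.
rewrite ls_mul_Em //.
exact: (Em_indep _ (top_bnd bx) hx (top_bnd byy) hy).
Qed.

Lemma mul_bnd x y Nx Ny : bnd x Nx -> bnd y Ny -> bnd (ls_mul x y) (Nx + Ny).
Proof.
move=> hx hy n hn; rewrite (mul_Em hx hy) /Em.
by rewrite leNgt hn.
Qed.

Lemma ser_mul x y Nx Ny k : bnd x Nx -> bnd y Ny ->
  ser (ls_mul x y) (Nx + Ny) k = pmul (ser x Nx) (ser y Ny) k.
Proof.
move=> hx hy; rewrite /ser (mul_Em hx hy) /Em.
have -> : Nx + Ny - k%:Z <= Nx + Ny by lia.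
by congr pmul; lia.
Qed.

End Ser.

Section Deg.
Variable F : fieldType.
Implicit Types x y z : LS F.

Lemma deg_exists x : ls_bounded x -> (exists n, x n != 0) ->
  exists d, x d != 0 /\ (forall m, d < m -> x m = 0).
Proof.
move=> [N hN] [m0 hm0].
have m0N : m0 <= N.
  rewrite leNgt; apply/negP => h; move: hm0; rewrite hN //; by rewrite eqxx.
pose P := fun k : nat => x (N - k%:Z) != 0.
have exP : exists k, P k.
  by exists `|(N - m0)%R|%N; rewrite /P; have -> : N - (`|(N - m0)%R|%N)%:Z = m0 by lia.
case: (ex_minnP exP) => k0 Pk0 mink.
exists (N - k0%:Z); split => // m hm.
case: (lerP m N) => hmN; last exact: hN.
have : ~~ P `|(N - m)%R|%N.
  apply/negP => h; have := mink _ h; lia.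
rewrite /P negbK; have -> : N - (`|(N - m)%R|%N)%:Z = m by lia.
by move/eqP.
Qed.

Lemma deg_spec x : ls_bounded x -> (exists n, x n != 0) ->
  x (ls_deg x) != 0 /\ bnd x (ls_deg x).
Proof.
move=> hb hn; rewrite /ls_deg.
exact: (epsilon_spec (inhabits 0) _ (deg_exists hb hn)).
Qed.

Lemma deg_unique x d : x d != 0 -> bnd x d -> ls_deg x = d.
Proof.
move=> h1 h2.
have [h3 h4] := deg_spec (bnd_bounded h2) (ex_intro _ d h1).
case: (ltrgtP d (ls_deg x)) => // h.
- by move: h3; rewrite h2 // eqxx.
- by move: h1; rewrite h4 // eqxx.
Qed.

Lemma size_inv_coefs (u : nat -> F) k : size (inv_coefs u k) = k.+1.
Proof. by elim: k => //= k IH; rewrite size_rcons IH. Qed.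

Definition wc (u : nat -> F) j := nth 0 (inv_coefs u j) j.

Lemma nth_inv_coefs u k j : (j <= k)%N -> nth 0 (inv_coefs u k) j = wc u j.
Proof.
elim: k => [|k IH]; first by rewrite leqn0 => /eqP ->.
rewrite leq_eqVlt => /orP [/eqP -> //|]; rewrite ltnS => hj.
by rewrite /= nth_rcons size_inv_coefs ltnS hj IH.
Qed.

Lemma wc0 u : wc u 0 = (u 0%N)^-1.
Proof. by []. Qed.

Lemma wc_rec u k : wc u k.+1 =
  - (u 0%N)^-1 * \sum_(i < k.+1) u i.+1 * wc u (k - i)%N.
Proof.
rewrite /wc /= nth_rcons size_inv_coefs ltnn eqxx; congr (_ * _).
by apply: eq_bigr => i _; rewrite nth_inv_coefs // leq_subr.
Qed.

Lemma pmul_wc u : u 0%N != 0 -> forall k, pmul u (wc u) k = if k == 0%N then 1 else 0.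
Proof.
move=> u0 [|k].
  by rewrite /pmul big_ord_recl big_ord0 addr0 /= wc0 mulfV.
rewrite /pmul big_ord_recl /= subn0 wc_rec.
under eq_bigr => i _ do rewrite subSS.
by rewrite mulrA mulrN mulfV // mulN1r addNr.
Qed.

Lemma wc_zero k : wc (fun _ => (0 : F)) k = 0.
Proof.
elim/ltn_ind: k => [[|k]] IH; first by rewrite wc0 invr0.
by rewrite wc_rec invr0 oppr0 mul0r.
Qed.

Lemma ls_inv_bnd x : bnd (ls_inv x) (- ls_deg x).
Proof. by move=> n hn; rewrite /ls_inv leNgt hn. Qed.

Lemma ls_inv0 : ls_inv (ls_zero F) =1 ls_zero F.
Proof.
move=> n; rewrite /ls_inv; case: ifP => // _.
rewrite nth_inv_coefs //; exact: wc_zero.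
Qed.

Lemma ls_poly_bnd (p : {poly F}) : bnd (ls_poly p) (size p)%:Z.
Proof.
move=> n hn; rewrite /ls_poly; case: ifP => // h.
rewrite nth_default //; move: hn; set k := size p => hn; lia.
Qed.

Lemma ls_poly1E n : ls_poly 1 n = if n == 0 then (1 : F) else 0.
Proof.
rewrite /ls_poly coefC; case: (boolP (0 <= n)) => h1; case: (boolP (n == 0)) => h2; case: (boolP (`|n|%N == 0%N)) => h3 //; lia.
Qed.

Lemma mul_inv x : ls_bounded x -> (exists n, x n != 0) ->
  forall n, ls_mul x (ls_inv x) n = ls_poly 1 n.
Proof.
move=> hb hn0 n; have [hd1 hd2] := deg_spec hb hn0.
set d := ls_deg x in hd1 hd2.
rewrite (mul_Em hd2 (ls_inv_bnd (x:=x))) /Em ls_poly1E.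
have -> : d + - d = 0 by rewrite addrN.
case: ifP => hn.
  rewrite (@pmul_ext _ _ (fun k : nat => x (d - k%:Z)) _ (wc (fun k : nat => x (d - k%:Z)))).
  - rewrite pmul_wc; last by rewrite subr0.
    by have -> : (`|(0 - n)%R|%N == 0%N) = (n == 0) by lia.
  - by [].
  - move=> j; rewrite /ser /ls_inv -/d.
    have -> : - d - j%:Z <= - d by lia.
    have -> : `|(- d - (- d - j%:Z))%R|%N = j by lia.
    by rewrite nth_inv_coefs.
by have -> : (n == 0) = false by lia.
Qed.

End Deg.

Section BLSdef.
Variable F : fieldType.

Record BLS := BL { bval : LS F; bbnd : ls_bounded bval }.

Lemma bls_eq (x y : BLS) : bval x = bval y -> x = y.
Proof.
case: x => x hx; case: y => y hy /= e; subst y.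
by rewrite (proof_irrelevance _ hx hy).
Qed.

Lemma bls_ext (x y : BLS) : (forall n, bval x n = bval y n) -> x = y.
Proof. by move=> h; apply: bls_eq; apply: funext. Qed.

HB.instance Definition _ := gen_eqMixin BLS.
HB.instance Definition _ := gen_choiceMixin BLS.

Implicit Types x y : LS F.
Lemma zero_bounded : ls_bounded (ls_zero F).
Proof. by exists 0. Qed.
Lemma add_bounded x y : ls_bounded x -> ls_bounded y -> ls_bounded (ls_add x y).
Proof.
move=> [N1 h1] [N2 h2]; exists (Num.max N1 N2) => n hn.
rewrite /ls_add h1 ?h2 ?addr0 //.
  by apply: le_lt_trans hn; rewrite le_max lexx orbT.
by apply: le_lt_trans hn; rewrite le_max lexx.
Qed.
Lemma opp_bounded x : ls_bounded x -> ls_bounded (ls_opp x).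
Proof. by move=> [N h]; exists N => n hn; rewrite /ls_opp h // oppr0. Qed.
Lemma mul_bounded x y : ls_bounded x -> ls_bounded y -> ls_bounded (ls_mul x y).
Proof. by move=> [N1 h1] [N2 h2]; exists (N1 + N2); apply: mul_bnd. Qed.
Lemma inv_bounded x : ls_bounded (ls_inv x).
Proof. by exists (- ls_deg x); apply: ls_inv_bnd. Qed.
Lemma poly_bounded (p : {poly F}) : ls_bounded (ls_poly p).
Proof. by exists (size p)%:Z; apply: ls_poly_bnd. Qed.

Definition bzero := BL zero_bounded.
Definition badd (x y : BLS) := BL (add_bounded (bbnd x) (bbnd y)).
Definition bopp (x : BLS) := BL (opp_bounded (bbnd x)).
Definition bmul (x y : BLS) := BL (mul_bounded (bbnd x) (bbnd y)).
Definition binv (x : BLS) := BL (inv_bounded (bval x)).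
Definition bpoly (p : {poly F}) := BL (poly_bounded p).
Definition bone := bpoly 1.

Lemma baddA : associative badd.
Proof. by move=> x y z; apply: bls_ext => n /=; rewrite /ls_add addrA. Qed.
Lemma baddC : commutative badd.
Proof. by move=> x y; apply: bls_ext => n /=; rewrite /ls_add addrC. Qed.
Lemma badd0 : left_id bzero badd.
Proof. by move=> x; apply: bls_ext => n /=; rewrite /ls_add add0r. Qed.
Lemma baddN : left_inverse bzero bopp badd.
Proof. by move=> x; apply: bls_ext => n /=; rewrite /ls_add /ls_opp addNr. Qed.

HB.instance Definition _ := GRing.isZmodule.Build BLS baddA baddC badd0 baddN.

Lemma bmulA : associative bmul.
Proof.
move=> x y z; apply: bls_ext => n /=.
have hx := top_bnd (bbnd x); have hy := top_bnd (bbnd y); have hz := top_bnd (bbnd z).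
set Nx := ls_top (bval x) in hx; set Ny := ls_top (bval y) in hy.
set Nz := ls_top (bval z) in hz.
rewrite (mul_Em hx (mul_bnd hy hz)) (mul_Em (mul_bnd hx hy) hz) /Em addrA.
case: ifP => // _.
transitivity (pmul (ser (bval x) Nx) (pmul (ser (bval y) Ny) (ser (bval z) Nz))
   `|(Nx + Ny + Nz - n)%R|%N).
  by apply: pmul_ext => // j; exact: ser_mul.
rewrite -pmulA; apply: pmul_ext => // j; symmetry; exact: ser_mul.
Qed.

Lemma bmulC : commutative bmul.
Proof.
move=> x y; apply: bls_ext => n /=.
have hx := top_bnd (bbnd x); have hy := top_bnd (bbnd y).
by rewrite (mul_Em hx hy) (mul_Em hy hx) Em_sym.
Qed.

Lemma bmul1 : left_id bone bmul.
Proof.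
move=> x; apply: bls_ext => n /=.
have hx := top_bnd (bbnd x); set Nx := ls_top (bval x) in hx.
have h1 : bnd (ls_poly (1 : {poly F})) 0.
  by move=> m hm; rewrite ls_poly1E; have -> : (m == 0) = false by lia.
rewrite (mul_Em h1 hx) /Em add0r.
case: ifP => hn.
  rewrite (@pmul_ext _ _ (fun j => if j == 0%N then 1 else 0) _ (ser (bval x) Nx)) //.
    by rewrite pmul_delta /ser; congr bval; lia.
  by move=> j; rewrite /ser ls_poly1E; congr (if _ then _ else _); lia.
by rewrite hx //; lia.
Qed.

Lemma bmulDl : left_distributive bmul badd.
Proof.
move=> x y z; apply: bls_ext => n /=.
have hx := top_bnd (bbnd x); have hy := top_bnd (bbnd y); have hz := top_bnd (bbnd z).
set Nx := ls_top (bval x) in hx; set Ny := ls_top (bval y) in hy.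
set Nz := ls_top (bval z) in hz.
set M := Num.max Nx Ny.
have hx' : bnd (bval x) M by apply: (bnd_mono _ hx); rewrite le_max lexx.
have hy' : bnd (bval y) M by apply: (bnd_mono _ hy); rewrite le_max lexx orbT.
have hxy : bnd (ls_add (bval x) (bval y)) M.
  by move=> m hm; rewrite /ls_add hx' ?hy' ?addr0.
rewrite /ls_add (mul_Em hxy hz) (mul_Em hx' hz) (mul_Em hy' hz) /Em.
case: ifP => _; last by rewrite addr0.
by rewrite -pmulDl.
Qed.

Lemma bone_neq0 : bone != bzero.
Proof.
apply/eqP => h; have := congr1 (fun x : BLS => bval x 0) h.
by rewrite /= ls_poly1E eqxx => /eqP; rewrite oner_eq0.
Qed.

HB.instance Definition _ := GRing.Zmodule_isComNzRing.Build BLS bmulA bmulC bmul1 bmulDl bone_neq0.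

Lemma bnz_ex (x : BLS) : x != 0 -> exists n, bval x n != 0.
Proof.
move=> h; apply: NNPP => hn; move/eqP: h; apply; apply: bls_ext => n /=.
case: (eqVneq (bval x n) 0) => // hh; exfalso; apply: hn; by exists n.
Qed.

Lemma bmulVf (x : BLS) : x != 0 -> bmul (binv x) x = 1.
Proof.
move=> hx; rewrite bmulC; apply: bls_ext => n /=.
exact: mul_inv (bbnd x) (bnz_ex hx) n.
Qed.

Lemma binv0 : binv 0 = 0.
Proof. by apply: bls_ext => n /=; rewrite ls_inv0. Qed.

HB.instance Definition _ := GRing.ComNzRing_isField.Build BLS bmulVf binv0.

End BLSdef.

Section Val.
Variable F : fieldType.
Local Notation K := (BLS F).
Implicit Types x y z : K.
Implicit Types p q : {poly F}.

Lemma bvalD x y n : bval (x + y) n = bval x n + bval y n. Proof. by []. Qed.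
Lemma bvalN x n : bval (- x) n = - bval x n. Proof. by []. Qed.
Lemma bvalB x y n : bval (x - y) n = bval x n - bval y n. Proof. by []. Qed.
Lemma bval0 n : bval (0 : K) n = 0. Proof. by []. Qed.
Lemma bvalM x y : bval (x * y) = ls_mul (bval x) (bval y). Proof. by []. Qed.
Lemma bvalV x : bval (x^-1) = ls_inv (bval x). Proof. by []. Qed.
Lemma bvalP p : bval (bpoly p) = ls_poly p. Proof. by []. Qed.

Definition le_deg x (N : int) := bnd (bval x) N.
Definition deg x := ls_deg (bval x).

Lemma le_deg_bnd x : exists N, le_deg x N.
Proof. by case: (bbnd x) => N h; exists N. Qed.

Lemma le_deg_mono x N N' : N <= N' -> le_deg x N -> le_deg x N'.
Proof. exact: bnd_mono. Qed.

Lemma le_degM x y N1 N2 : le_deg x N1 -> le_deg y N2 -> le_deg (x * y) (N1 + N2).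
Proof. exact: mul_bnd. Qed.

Lemma le_degD x y N : le_deg x N -> le_deg y N -> le_deg (x + y) N.
Proof. by move=> h1 h2 n hn; rewrite bvalD h1 ?h2 ?addr0. Qed.

Lemma le_degN x N : le_deg x N -> le_deg (- x) N.
Proof. by move=> h n hn; rewrite bvalN h ?oppr0. Qed.

Lemma le_degB x y N : le_deg x N -> le_deg y N -> le_deg (x - y) N.
Proof. by move=> h1 h2; apply: le_degD => //; apply: le_degN. Qed.

Lemma le_deg0 N : le_deg 0 N.
Proof. by []. Qed.

Lemma deg_nz x : x != 0 -> bval x (deg x) != 0 /\ le_deg x (deg x).
Proof. by move=> h; apply: deg_spec (bbnd x) (bnz_ex h). Qed.

Lemma deg_char x d : bval x d != 0 -> le_deg x d -> deg x = d.
Proof. exact: deg_unique. Qed.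

Lemma nz_of x n : bval x n != 0 -> x != 0.
Proof. by move=> h; apply/eqP => e; move: h; rewrite e bval0 eqxx. Qed.

Lemma le_deg_deg x N : x != 0 -> le_deg x N -> deg x <= N.
Proof.
move=> hx h; have [h1 _] := deg_nz hx; rewrite leNgt; apply/negP => hh.
by move: h1; rewrite h // eqxx.
Qed.

Lemma deg_le_deg x N : x != 0 -> deg x <= N -> le_deg x N.
Proof. move=> hx h; have [_ h2] := deg_nz hx; exact: le_deg_mono h h2. Qed.

Lemma degM x y : x != 0 -> y != 0 -> deg (x * y) = deg x + deg y.
Proof.
move=> hx hy; have [hx1 hx2] := deg_nz hx; have [hy1 hy2] := deg_nz hy.
apply: deg_char; last exact: le_degM.
rewrite bvalM (mul_Em hx2 hy2) /Em lexx subrr /= /pmul big_ord_recl big_ord0 addr0.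
by rewrite /ser !subr0 mulf_neq0.
Qed.

Lemma deg1 : deg (1 : K) = 0.
Proof.
apply: deg_char; first by rewrite /= ls_poly1E eqxx oner_neq0.
by move=> n hn; rewrite /= ls_poly1E; have -> : (n == 0) = false by lia.
Qed.

Lemma degV x : x != 0 -> deg (x^-1) = - deg x.
Proof.
move=> hx; have hv : x^-1 != 0 by rewrite invr_eq0.
have := degM hx hv; rewrite mulfV // deg1 => /eqP; rewrite eq_sym addr_eq0.
by move/eqP ->; rewrite opprK.
Qed.

Lemma deg_addl x y : x != 0 -> le_deg y (deg x - 1) -> x + y != 0 /\ deg (x + y) = deg x.
Proof.
move=> hx hy; have [h1 h2] := deg_nz hx.
have e : bval (x + y) (deg x) = bval x (deg x) by rewrite bvalD hy ?addr0 //; lia.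
split; first by apply: (@nz_of _ (deg x)); rewrite e.
apply: deg_char; first by rewrite e.
apply: le_degD => //; apply: le_deg_mono hy; lia.
Qed.

Lemma le_degV x N : x != 0 -> N <= deg x -> le_deg x^-1 (- N).
Proof.
move=> hx hN; apply: deg_le_deg; first by rewrite invr_eq0.
by rewrite degV // lerN2.
Qed.

Lemma deg_opp x : deg (- x) = deg x.
Proof.
case: (eqVneq x 0) => [->|hx]; first by rewrite oppr0.
have [h1 h2] := deg_nz hx; apply: deg_char; last exact: le_degN.
by rewrite bvalN oppr_eq0.
Qed.

Lemma le_deg_eq0 x : (forall N, le_deg x N) -> x = 0.
Proof.
move=> h; apply: bls_ext => n; rewrite bval0; apply: (h (n - 1)); lia.
Qed.

Lemma bpoly_add p q : bpoly (p + q) = bpoly p + bpoly q :> K.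
Proof. by apply: bls_ext => n; rewrite bvalD /= /ls_poly coefD; case: ifP; rewrite ?addr0. Qed.

Lemma bpoly_opp p : bpoly (- p) = - bpoly p :> K.
Proof. by apply: bls_ext => n; rewrite bvalN /= /ls_poly coefN; case: ifP; rewrite ?oppr0. Qed.

Lemma bpoly_sub p q : bpoly (p - q) = bpoly p - bpoly q :> K.
Proof. by rewrite bpoly_add bpoly_opp. Qed.

Lemma bpoly0 : bpoly 0 = 0 :> K.
Proof. by apply: bls_ext => n; rewrite /= /ls_poly coef0; case: ifP. Qed.

Lemma bpoly1 : bpoly 1 = 1 :> K.
Proof. by []. Qed.

Lemma bpolyX_mul y n : bval (bpoly 'X * y) n = bval y (n - 1).
Proof.
have [Ny hy] := le_deg_bnd y.
have hX : bnd (ls_poly ('X : {poly F})) 1.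
  move=> m hm; rewrite /ls_poly coefX; case: ifP => // _.
  by have -> : (`|m|%N == 1%N) = false by lia.
rewrite bvalM (mul_Em hX hy) /Em; case: ifP => hn.
  rewrite (@pmul_ext _ _ (fun j => if j == 0%N then 1 else 0) _ (ser (bval y) Ny)) //.
    by rewrite pmul_delta /ser; congr bval; lia.
  move=> j; rewrite /ser /ls_poly coefX.
  case: (boolP (0 <= 1 - j%:Z)) => h1; case: (boolP (j == 0%N)) => h2;
    case: (boolP (`|(1 - j%:Z)%R|%N == 1%N)) => h3 //; lia.
by rewrite hy //; lia.
Qed.

Lemma bpolyC_mul c y n : bval (bpoly c%:P * y) n = c * bval y n.
Proof.
have [Ny hy] := le_deg_bnd y.
have hC : bnd (ls_poly c%:P) 0.
  move=> m hm; rewrite /ls_poly coefC; case: ifP => // _.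
  by have -> : (`|m|%N == 0%N) = false by lia.
rewrite bvalM (mul_Em hC hy) /Em add0r; case: ifP => hn.
  rewrite (@pmul_ext _ _ (fun j => if j == 0%N then c else 0) _ (ser (bval y) Ny)) //.
    by rewrite pmul_cdelta /ser; congr (_ * bval _ _); lia.
  move=> j; rewrite /ser /ls_poly coefC.
  case: (boolP (0 <= 0 - j%:Z)) => h1; case: (boolP (j == 0%N)) => h2;
    case: (boolP (`|(0 - j%:Z)%R|%N == 0%N)) => h3 //; lia.
by rewrite hy ?mulr0 //; lia.
Qed.

Lemma bpolyXM q : bpoly ('X * q) = bpoly 'X * bpoly q :> K.
Proof.
apply: bls_ext => n; rewrite bpolyX_mul /= /ls_poly coefXM.
case: (boolP (0 <= n)) => h1; case: (boolP (0 <= n - 1)) => h2;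
  case: (boolP (`|n|%N == 0%N)) => h3 //; try lia.
by congr (q`__); lia.
Qed.

Lemma bpolyCM c q : bpoly (c%:P * q) = bpoly c%:P * bpoly q :> K.
Proof.
apply: bls_ext => n; rewrite bpolyC_mul /= /ls_poly coefCM.
by case: ifP; rewrite ?mulr0.
Qed.

Lemma bpoly_mul p q : bpoly (p * q) = bpoly p * bpoly q :> K.
Proof.
elim/poly_ind: p q => [|p c IH] q; first by rewrite mul0r bpoly0 mul0r.
rewrite mulrDl bpoly_add bpolyCM -mulrA [_ * q]mulrC IH.
rewrite bpoly_add IH [q * _]mulrC bpolyXM.
by rewrite mulrDl mulrA.
Qed.

Lemma bpoly_eq0 p : (bpoly p == 0 :> K) = (p == 0).
Proof.
apply/idP/idP => [/eqP h|/eqP ->]; last by rewrite bpoly0.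
apply/eqP/polyP => i; rewrite coef0.
have := congr1 (fun x : K => bval x i%:Z) h; rewrite bval0 /= /ls_poly.
by have -> : (0 <= i%:Z) = true by lia.
Qed.

Definition pdeg' (p : {poly F}) : int := ((size p).-1)%:Z.

Lemma deg_bpoly p : p != 0 -> deg (bpoly p) = pdeg p.
Proof.
move=> hp; rewrite /pdeg; apply: deg_char.
  rewrite /= /ls_poly; have -> : (0 <= ((size p).-1)%:Z) = true by lia.
  have -> : `|((size p).-1)%:Z|%N = (size p).-1 by lia.
  by rewrite -lead_coefE lead_coef_eq0.
move=> n hn; rewrite /= /ls_poly; case: ifP => // _.
rewrite nth_default //; move: hn; set k := size p; lia.
Qed.

Lemma le_deg_bpoly p : le_deg (bpoly p) (pdeg p).
Proof.
move=> n hn; rewrite /= /ls_poly; case: ifP => // _.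
rewrite nth_default //; move: hn; rewrite /pdeg; set k := size p.
have : (0 < k)%N \/ k = 0%N by lia.
case=> [h|->] hn; lia.
Qed.

End Val.

Ltac fieldp := field; repeat (apply/andP; split); try done.

Section CF.
Variable F : fieldType.
Local Notation K := (BLS F).
Implicit Types x y z X Y Z : K.
Implicit Types p q c : {poly F}.
Implicit Types l : seq {poly F}.

Fixpoint cfa l X : K := if l is c :: l' then bpoly c + (cfa l' X)^-1 else X.

Fixpoint cff l : K :=
  match l with
  | [::] => 0
  | c :: l' => if l' is [::] then bpoly c else bpoly c + (cff l')^-1
  end.

Lemma bval_cff l : bval (cff l) = cf_fin l.
Proof.
elim: l => [|c l IH] //=; case: l IH => [|c' l'] IH //=.
by move: IH => /= ->.
Qed.

Lemma cff_rcons l c : cff (rcons l c) = cfa l (bpoly c).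
Proof.
elim: l => [|c' l IH] //=; rewrite -IH; by case: l {IH}.
Qed.

Lemma cfa_cat l1 l2 X : cfa (l1 ++ l2) X = cfa l1 (cfa l2 X).
Proof. by elim: l1 => //= c l IH; rewrite IH. Qed.

Definition nonconst l := all (fun c : {poly F} => (1 < size c)%N) l.

Lemma pdeg_ge1 c : (1 < size c)%N -> 1 <= pdeg c.
Proof. rewrite /pdeg; move=> h; lia. Qed.

Lemma nc_nz c : (1 < size c)%N -> c != 0.
Proof. by move=> h; apply/eqP => e; move: h; rewrite e size_poly0. Qed.

Lemma cfa_nz c l X : nonconst (c :: l) -> le_deg X^-1 0 ->
  cfa (c :: l) X != 0 /\ deg (cfa (c :: l) X) = pdeg c.
Proof.
elim: l c => [|c' l IH] c /= /andP [hc hl] hX.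
  have hcz := nc_nz hc.
  have := @deg_addl _ (bpoly c) (X^-1); rewrite bpoly_eq0 deg_bpoly //.
  apply => //; apply: (le_deg_mono _ hX); have := pdeg_ge1 hc; lia.
have [h1 h2] := IH c' hl hX; move: h1 h2 => /=.
set W := bpoly c' + _ => h1 h2.
have hcz := nc_nz hc.
have := @deg_addl _ (bpoly c) (W^-1); rewrite bpoly_eq0 deg_bpoly //.
apply => //; apply: (le_deg_mono _ (le_degV h1 (lexx _))); rewrite h2.
move/andP: hl => [hc' _]; have := pdeg_ge1 hc; have := pdeg_ge1 hc'; lia.
Qed.

Lemma cfa_le0 l X : nonconst l -> le_deg X^-1 0 -> le_deg (cfa l X)^-1 0.
Proof.
case: l => [|c l] //= hl hX.
have [h1 h2] := cfa_nz hl hX; move: h1 h2 => /= h1 h2.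
apply: (le_deg_mono _ (le_degV h1 (lexx _))); rewrite h2.
move/andP: hl => [hc _]; have := pdeg_ge1 hc; lia.
Qed.

Lemma inv_diff x y : x != 0 -> y != 0 -> x != y ->
  x^-1 - y^-1 != 0 /\ deg (x^-1 - y^-1) = deg (x - y) - deg x - deg y.
Proof.
move=> hx hy hxy.
have e : x^-1 - y^-1 = (y - x) * (x^-1 * y^-1) by fieldp.
have hyx : y - x != 0 by rewrite subr_eq0 eq_sym.
have hv : x^-1 * y^-1 != 0 by rewrite mulf_neq0 // invr_eq0.
rewrite e; split; first by rewrite mulf_neq0.
rewrite degM // degM ?invr_eq0 // !degV // -opprB deg_opp addrA. reflexivity.
Qed.

Lemma cfa_diff c l X Y : nonconst l -> X != 0 -> Y != 0 -> X != Y ->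
  le_deg X^-1 0 -> le_deg Y^-1 0 ->
  cfa (c :: l) X - cfa (c :: l) Y != 0 /\
  deg (cfa (c :: l) X - cfa (c :: l) Y) =
    deg (X - Y) - deg X - deg Y - 2 * \sum_(d <- l) pdeg d.
Proof.
move=> + hX hY hXY hX' hY'.
elim: l c => [|c' l IH] c hl /=.
  have -> : bpoly c + X^-1 - (bpoly c + Y^-1) = X^-1 - Y^-1 by ring.
  by rewrite big_nil mulr0 subr0; apply: inv_diff.
move: (hl) => /andP [hc' hl'].
have [IH1 IH2] := IH c' hl'; move: IH1 IH2 => /=.
set U := bpoly c' + _; set V := bpoly c' + _ => IH1 IH2.
have [hU1 hU2] := cfa_nz hl hX'; have [hV1 hV2] := cfa_nz hl hY'.
move: hU1 hU2 hV1 hV2 => /= hU1 hU2 hV1 hV2; rewrite -/U -/V in hU1 hU2 hV1 hV2.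
have hUV : U != V by rewrite -subr_eq0.
have -> : bpoly c + U^-1 - (bpoly c + V^-1) = U^-1 - V^-1 by ring.
have [h1 h2] := inv_diff hU1 hV1 hUV; split => //.
rewrite h2 IH2 hU2 hV2 big_cons; lia.
Qed.

Fixpoint mob l : {poly F} * {poly F} * {poly F} * {poly F} :=
  if l is c :: l' then
    let m := mob l' in (c * m.1.1.1 + m.1.2, c * m.1.1.2 + m.2, m.1.1.1, m.1.1.2)
  else (1, 0, 0, 1).

Definition m1 l := (mob l).1.1.1.
Definition m2 l := (mob l).1.1.2.
Definition m3 l := (mob l).1.2.
Definition m4 l := (mob l).2.

Lemma mob_det l : m1 l * m4 l - m2 l * m3 l = (-1) ^+ (size l).
Proof.
elim: l => [|c l IH]; first by rewrite /m1 /m2 /m3 /m4 /= mulr1 mulr0 subr0 expr0.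
rewrite /m1 /m2 /m3 /m4 /= -/(m1 l) -/(m2 l) -/(m3 l) -/(m4 l) exprS -IH.
ring.
Qed.

Lemma mob_eq l X : X != 0 ->
  (forall k, (0 < k < size l)%N -> cfa (drop k l) X != 0) ->
  bpoly (m3 l) * X + bpoly (m4 l) != 0 /\
  cfa l X = (bpoly (m1 l) * X + bpoly (m2 l)) / (bpoly (m3 l) * X + bpoly (m4 l)).
Proof.
move=> hX; elim: l => [|c l IH] hk.
  rewrite /m1 /m2 /m3 /m4 /= bpoly0 bpoly1 mul0r add0r mul1r addr0 invr1 mulr1.
  by rewrite oner_neq0.
have hk' : forall k, (0 < k < size l)%N -> cfa (drop k l) X != 0.
  move=> k hk1; have := hk k.+1; rewrite /=; apply; move: hk1 => /=; lia.
have [hD e] := IH hk'.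
have hW : cfa l X != 0.
  case: l {IH hk' hD e} hk => [|c' l'] hk //=.
  by have := hk 1%N; rewrite drop1 /=; apply.
rewrite /m1 /m2 /m3 /m4 /= -/(m1 l) -/(m2 l) -/(m3 l) -/(m4 l).
set D := bpoly (m3 l) * X + bpoly (m4 l) in hD e.
set N := bpoly (m1 l) * X + bpoly (m2 l) in e.
have hN : N != 0.
  apply/eqP => hN; move: hW; rewrite e hN mul0r eqxx //.
split => //; rewrite e.
rewrite !bpoly_add !bpoly_mul.
have -> : (bpoly c * bpoly (m1 l) + bpoly (m3 l)) * X + (bpoly c * bpoly (m2 l) + bpoly (m4 l))
  = bpoly c * N + D by rewrite /N /D; ring.
rewrite -/N; clear e; move: (bpoly c) N D hN hD => a N D hN hD.
by fieldp.
Qed.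

Lemma cfa_rev l Z : cfa l (- (cfa (rev l) Z)^-1) = - Z^-1.
Proof.
elim: l Z => [|c l IH] Z //=.
rewrite rev_cons -cats1 cfa_cat /= IH invrN invrK; ring.
Qed.

End CF.

Section Lim.
Variable F : fieldType.
Local Notation K := (BLS F).
Implicit Types x y z X Y Z : K.
Implicit Types p q : {poly F}.
Implicit Types l : seq {poly F}.
Implicit Types c : nat -> {poly F}.

Lemma mkseqS0 (T : Type) (f : nat -> T) n : mkseq f n.+1 = f 0%N :: mkseq (fun i => f i.+1) n.
Proof.
rewrite /mkseq /=; have := iotaDl 1 0 n; rewrite addn0 => ->; rewrite -map_comp; congr (_ :: _).
Qed.

Definition cv c n : K := cff (mkseq c n.+1).
Definition shc c := fun i => c i.+1.
Definition nc c := forall i, (0 < i)%N -> (1 < size (c i))%N.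

Lemma cf_conv_cv c n : cf_conv c n = bval (cv c n).
Proof. by rewrite /cv bval_cff. Qed.

Lemma cv0 c : cv c 0 = bpoly (c 0%N).
Proof. by []. Qed.

Lemma cvS c n : cv c n.+1 = bpoly (c 0%N) + (cv (shc c) n)^-1.
Proof.
rewrite /cv (mkseqS0 c n.+1).
have : mkseq (fun i => c i.+1) n.+1 != [::] by rewrite -size_eq0 size_mkseq.
by case: (mkseq _ n.+1).
Qed.

Lemma cff_nz l : l != [::] -> nonconst l ->
  cff l != 0 /\ deg (cff l) = pdeg (head 0 l) /\ le_deg (cff l)^-1 (-1).
Proof.
elim: l => [|c l IH] // _ /= /andP [hc hl].
have hcz := nc_nz hc; have h1 := pdeg_ge1 hc.
have key : cff (c :: l) != 0 /\ deg (cff (c :: l)) = pdeg c.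
  case: l IH hl => [|c' l'] IH hl /=.
    by rewrite bpoly_eq0 hcz deg_bpoly.
  have [hn [hd hv]] := IH isT hl.
  have := @deg_addl _ (bpoly c) ((cff (c' :: l'))^-1); rewrite bpoly_eq0 deg_bpoly //.
  apply => //; apply: (le_deg_mono _ hv); lia.
case: key => k1 k2; move: k1 k2 => /= k1 k2; split => //; split => //.
apply: (le_deg_mono _ (le_degV k1 (lexx _))); rewrite k2; lia.
Qed.

Lemma nc_shc c : nc c -> nc (shc c).
Proof. by move=> h i _; apply: h. Qed.

Lemma nonconst_mkseq_sh c n : nc c -> nonconst (mkseq (shc c) n).
Proof.
move=> h; apply/allP => x /mapP [i _ ->]; exact: h.
Qed.

Lemma cv_sh c n : nc c ->
  cv (shc c) n != 0 /\ deg (cv (shc c) n) = pdeg (c 1%N) /\ le_deg (cv (shc c) n)^-1 (-1).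
Proof.
move=> h; rewrite /cv; have := @cff_nz (mkseq (shc c) n.+1).
have hn := nonconst_mkseq_sh n.+1 h.
rewrite (mkseqS0 (shc c) n) in hn * => /=; apply => //.
Qed.

Definition conv c x := forall M : int, exists N : nat, forall n, (N <= n)%N -> le_deg (x - cv c n) M.

Lemma is_cf_conv c x : is_cf c (bval x) -> nc c /\ conv c x.
Proof.
move=> [h1 h2]; split => // M; have [N hN] := h2 (M + 1).
exists N => n hn m hm; have := hN n hn m; rewrite cf_conv_cv; apply; lia.
Qed.

Lemma conv_is_cf c x : nc c -> conv c x -> is_cf c (bval x).
Proof.
move=> h1 h2; split => // M; have [N hN] := h2 (M - 1).
exists N => n hn m hm; have := hN n hn m; rewrite cf_conv_cv; apply; lia.
Qed.

Lemma is_cf_uniq c (x y : LS F) : is_cf c x -> is_cf c y -> forall n, x n = y n.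
Proof.
move=> [_ hx] [_ hy] n; have [N1 h1] := hx n; have [N2 h2] := hy n.
have := h1 (maxn N1 N2) (leq_maxl _ _) n (lexx _).
have := h2 (maxn N1 N2) (leq_maxr _ _) n (lexx _).
rewrite /ls_sub => /eqP; rewrite subr_eq0 => /eqP -> /eqP; rewrite subr_eq0.
by move/eqP.
Qed.

Lemma is_cf_uniqK c x y : is_cf c (bval x) -> is_cf c (bval y) -> x = y.
Proof. by move=> h1 h2; apply: bls_ext; apply: is_cf_uniq h1 h2. Qed.

Lemma is_cf_ext c c' (x : LS F) : (forall i, c i = c' i) -> is_cf c x -> is_cf c' x.
Proof. by move=> h; have -> : c = c' by apply: funext. Qed.

Lemma tail c x : is_cf c (bval x) ->
  let y := (x - bpoly (c 0%N))^-1 in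
  [/\ y != 0, deg y = pdeg (c 1%N), is_cf (shc c) (bval y) & x = bpoly (c 0%N) + y^-1].
Proof.
move=> hcf; have [hnc hcv] := is_cf_conv hcf.
set e := pdeg (c 1%N).
have he : 1 <= e by apply: pdeg_ge1; apply: hnc.
have [N0 hN0] := hcv (- e - 1).
have [yn1 [yn2 yn3]] := cv_sh N0 hnc; rewrite -/e in yn2.
have hyn : (cv (shc c) N0)^-1 != 0 by rewrite invr_eq0.
have e1 : x - bpoly (c 0%N) = (cv (shc c) N0)^-1 + (x - cv c N0.+1).
  by rewrite cvS; ring.
have [hu1 hu2] : x - bpoly (c 0%N) != 0 /\ deg (x - bpoly (c 0%N)) = - e.
  rewrite e1; have := deg_addl hyn; rewrite degV // yn2; apply.
  by apply: (le_deg_mono _ (hN0 _ (leqnSn _))); lia.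
set u := x - bpoly (c 0%N) in e1 hu1 hu2 *.
have hy : u^-1 != 0 by rewrite invr_eq0.
have hdy : deg u^-1 = e by rewrite degV // hu2 opprK.
split => //.
- apply: conv_is_cf; first exact: nc_shc.
  move=> M; have [N hN] := hcv (M - e - e); exists N => n hn.
  have [v1 [v2 v3]] := cv_sh n hnc; rewrite -/e in v2.
  have ee : u^-1 - cv (shc c) n = (cv c n.+1 - x) * u^-1 * cv (shc c) n.
    rewrite cvS /u; move: (cv (shc c) n) v1 hu1 => w v1; rewrite -/u => hu1.
    have -> : bpoly (c 0%N) + w^-1 - x = w^-1 - u by rewrite /u; ring.
    by fieldp.
  rewrite ee; have -> : M = M - e - e + e + e by ring.
  apply: le_degM; last first.
    by apply: deg_le_deg => //; rewrite v2.
  apply: le_degM; last by apply: deg_le_deg => //; rewrite hdy.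
  rewrite -opprB; apply: le_degN; apply: hN; lia.
- by rewrite invrK /u; ring.
Qed.

Definition shk c k := fun i => c (k + i)%N.

Lemma nc_shk c k : nc c -> nc (shk c k).
Proof. by move=> h i hi; apply: h; lia. Qed.

Lemma tails c x k : is_cf c (bval x) ->
  exists y, [/\ is_cf (shk c k) (bval y), x = cfa (mkseq c k) y &
     (0 < k)%N -> y != 0 /\ deg y = pdeg (c k)].
Proof.
move=> hcf; elim: k => [|k [y [hy1 hy2 hy3]]].
  exists x; split => //; apply: is_cf_ext hcf => i.
have [hnc _] := is_cf_conv hcf.
have := tail hy1; set y' := (y - _)^-1; move=> [h1 h2 h3 h4].
exists y'; split.
- by apply: is_cf_ext h3 => i; rewrite /shc /shk; congr c; lia.
- by rewrite hy2 mkseqS -cats1 cfa_cat /= h4 /shk addn0.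
- by move=> _; split => //; rewrite h2 /shk addn1.
Qed.

Lemma cv_stab c n : nc c -> le_deg (cv c n.+1 - cv c n) (- (n.+1)%:Z).
Proof.
elim: n c => [|n IH] c hc.
  rewrite cvS cv0 /cv /=.
  have -> : bpoly (c 0%N) + (bpoly (c 1%N))^-1 - bpoly (c 0%N) = (bpoly (c 1%N))^-1 by ring.
  have h1 := hc 1%N isT; have hz := nc_nz h1.
  apply: (le_deg_mono _ (le_degV _ (lexx _))); last by rewrite bpoly_eq0.
  rewrite deg_bpoly //; have := pdeg_ge1 h1; lia.
rewrite cvS [cv c n.+1]cvS.
have -> : bpoly (c 0%N) + (cv (shc c) n.+1)^-1 - (bpoly (c 0%N) + (cv (shc c) n)^-1)
  = (cv (shc c) n.+1)^-1 - (cv (shc c) n)^-1 by ring.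
have [u1 [u2 _]] := cv_sh n.+1 hc; have [v1 [v2 _]] := cv_sh n hc.
case: (eqVneq (cv (shc c) n.+1) (cv (shc c) n)) => [->|hne].
  by rewrite subrr.
have [d1 d2] := inv_diff u1 v1 hne.
apply: deg_le_deg => //; rewrite d2 u2 v2.
have := le_deg_deg _ (IH _ (nc_shc hc)); rewrite subr_eq0 => /(_ hne) hh.
have := pdeg_ge1 (hc 1%N isT); move: hh; set a := deg _; set b := pdeg _; lia.
Qed.

Lemma cv_stab2 c j k (m : int) : nc c -> (j <= k)%N -> - j%:Z <= m -> bval (cv c k) m = bval (cv c j) m.
Proof.
move=> hc hjk hm; elim: k hjk => [|k IH] hjk.
  by move: hjk; rewrite leqn0 => /eqP ->.
case: (eqVneq j k.+1) => [-> //|hne].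
have hjk' : (j <= k)%N by lia.
rewrite -IH //; apply/eqP; rewrite -subr_eq0 -bvalB; apply/eqP.
apply: (@cv_stab c k hc m); lia.
Qed.

Lemma cv_bnd c n : nc c -> le_deg (cv c n) (size (c 0%N))%:Z.
Proof.
move=> hc; case: n => [|n].
  rewrite cv0; apply: (le_deg_mono _ (@le_deg_bpoly _ (c 0%N))); rewrite /pdeg; lia.
rewrite cvS; apply: le_degD.
  apply: (le_deg_mono _ (@le_deg_bpoly _ (c 0%N))); rewrite /pdeg; lia.
have [_ [_ h]] := cv_sh n hc; apply: (le_deg_mono _ h); lia.
Qed.

Lemma cf_exists c : nc c -> exists x : K, is_cf c (bval x).
Proof.
move=> hc; pose xf := fun m : int => bval (cv c `|m|%N) m.
have hb : ls_bounded xf.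
  exists (size (c 0%N))%:Z => m hm; rewrite /xf; exact: (cv_bnd _ hc).
exists (BL hb); apply: conv_is_cf => // M; exists `|M|%N => n hn m hm.
rewrite bvalB /= /xf; apply/eqP; rewrite subr_eq0; apply/eqP.
set j := minn `|m|%N n.
rewrite (@cv_stab2 c j `|m|%N m hc) ?geq_minl //; last by rewrite /j; lia.
by rewrite (@cv_stab2 c j n m hc) ?geq_minr //; rewrite /j; lia.
Qed.

End Lim.

Section Gen.
Variable F : fieldType.
Local Notation K := (BLS F).

Lemma sum_mkseq_sh (g : nat -> {poly F}) n :
  \sum_(d <- mkseq (fun i => g i.+1) n) pdeg d = \sum_(1 <= i < n.+1) pdeg (g i).
Proof. by rewrite big_map big_add1 /= /index_iota subn0. Qed.

Lemma cfa_nz0 (l : seq {poly F}) (X : K) : nonconst l -> X != 0 -> le_deg X^-1 0 ->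
  cfa l X != 0.
Proof.
case: l => [|c l] //= hl hX hX'.
by have [h _] := cfa_nz hl hX'.
Qed.

Lemma le_deg_inv_ge (X : K) N : X != 0 -> N <= deg X -> le_deg X^-1 (- N).
Proof. exact: le_degV. Qed.


Lemma mob_size (l : seq {poly F}) : nonconst l -> (size (m3 l) < size (m1 l))%N.
Proof.
elim: l => [|c l IH] /=; first by rewrite /m1 /m3 /= size_poly0 size_poly1.
move=> /andP [hc hl]; have := IH hl.
rewrite /m1 /m3 /= -/(m1 l) -/(m3 l) => h.
have h1 : m1 l != 0 by rewrite -size_poly_eq0; lia.
have hcz := nc_nz hc.
have hs : size (c * m1 l) = (size c + size (m1 l)).-1 by rewrite size_mul.
rewrite size_polyDl; rewrite hs; move: hc h; set u := size c; set v := size (m1 l); set w := size (m3 l); lia.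
Qed.

Lemma m3_nz (l : seq {poly F}) : nonconst l -> l != [::] -> m3 l != 0.
Proof.
case: l => [|c l] //= /andP [_ hl] _; rewrite /m3 /= -/(m1 l).
have := mob_size hl; rewrite -size_poly_eq0; lia.
Qed.

Lemma per_fix (c : nat -> {poly F}) (l : seq {poly F}) (x : K) : is_cf c (bval x) ->
  (forall i, c (size l + i)%N = c i) -> mkseq c (size l) = l -> x = cfa l x.
Proof.
move=> hcf hp hm; have [y [h1 h2 _]] := @tails _ c x (size l) hcf.
have hy : is_cf c (bval y) by apply: is_cf_ext h1 => i; rewrite /shk hp.
by rewrite (is_cf_uniqK hy hcf) hm in h2.
Qed.

Lemma drop_rcons1 (T : Type) (l : seq T) x k : (k <= size l)%N ->
  drop k (rcons l x) = rcons (drop k l) x.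
Proof.
move=> hk; rewrite -!cats1 drop_cat; case: ifP => // h.
have -> : k = size l by lia.
by rewrite subnn drop0 drop_oversize.
Qed.

Lemma nonconst_drop (g : nat -> {poly F}) n k : (0 < k)%N ->
  (forall i, (0 < i)%N -> (1 < size (g i))%N) -> nonconst (drop k (mkseq g n)).
Proof.
move=> hk hg; apply/(all_nthP 0) => j hj; rewrite nth_drop nth_mkseq.
  by apply: hg; lia.
by move: hj; rewrite size_drop size_mkseq; lia.
Qed.

Definition qu2 (A B C P P' Q Q' : {poly F}) := A * P * P + B * P * Q + C * Q * Q.
Definition qu1 (A B C P P' Q Q' : {poly F}) :=
  A * (P * P' + P * P') + B * (P * Q' + P' * Q) + C * (Q * Q' + Q * Q').
Definition qu0 (A B C P P' Q Q' : {poly F}) := A * P' * P' + B * P' * Q' + C * Q' * Q'.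

Lemma transport (A B C P P' Q Q' : {poly F}) (Y X : K) :
  bpoly Q * Y + bpoly Q' != 0 ->
  X = (bpoly P * Y + bpoly P') / (bpoly Q * Y + bpoly Q') ->
  bpoly A * (X * X) + bpoly B * X + bpoly C =
  (bpoly (qu2 A B C P P' Q Q') * (Y * Y) + bpoly (qu1 A B C P P' Q Q') * Y
    + bpoly (qu0 A B C P P' Q Q')) / ((bpoly Q * Y + bpoly Q') * (bpoly Q * Y + bpoly Q')).
Proof.
move=> hD ->; rewrite /qu2 /qu1 /qu0 !(bpoly_add, bpoly_mul).
move: hD; move: (bpoly A) (bpoly B) (bpoly C) (bpoly P) (bpoly P') (bpoly Q) (bpoly Q') => a0 b0 c0 p0 p1 q0 q1 hD.
by fieldp.
Qed.

Lemma fix_quad (l : seq {poly F}) (X : K) : X = cfa l X ->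
  bpoly (m3 l) * X + bpoly (m4 l) != 0 ->
  cfa l X = (bpoly (m1 l) * X + bpoly (m2 l)) / (bpoly (m3 l) * X + bpoly (m4 l)) ->
  bpoly (m3 l) * (X * X) + bpoly (m4 l - m1 l) * X + bpoly (- m2 l) = 0.
Proof.
move=> h1 hD h2.
have e : X * (bpoly (m3 l) * X + bpoly (m4 l)) = bpoly (m1 l) * X + bpoly (m2 l).
  by rewrite {1}h1 h2 divfK.
rewrite bpoly_sub bpoly_opp.
transitivity (X * (bpoly (m3 l) * X + bpoly (m4 l)) - (bpoly (m1 l) * X + bpoly (m2 l))).
  by ring.
by rewrite e subrr.
Qed.

Lemma nonconst_sub (l l' : seq {poly F}) : nonconst l -> {subset l' <= l} -> nonconst l'.
Proof. by move=> h hs; apply/allP => x hx; apply: (allP h); apply: hs. Qed.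

Lemma vieta (A B C : {poly F}) (x y z : K) : A != 0 -> x != y ->
  bpoly A * (x * x) + bpoly B * x + bpoly C = 0 ->
  bpoly A * (y * y) + bpoly B * y + bpoly C = 0 ->
  bpoly A * (x + z) + bpoly B = 0 -> z = y.
Proof.
move=> hA hxy e1 e2 e3.
have hv : bpoly A * (x + y) + bpoly B = 0.
  have : (x - y) * (bpoly A * (x + y) + bpoly B) = 0.
    transitivity ((bpoly A * (x * x) + bpoly B * x + bpoly C)
      - (bpoly A * (y * y) + bpoly B * y + bpoly C)); first by ring.
    by rewrite e1 e2 subrr.
  by move/eqP; rewrite mulf_eq0 subr_eq0 (negbTE hxy) /= => /eqP.
have : bpoly A * (z - y) = 0.
  transitivity ((bpoly A * (x + z) + bpoly B) - (bpoly A * (x + y) + bpoly B)).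
    by ring.
  by rewrite e3 hv subrr.
by move/eqP; rewrite mulf_eq0 bpoly_eq0 (negbTE hA) /= subr_eq0 => /eqP.
Qed.

Lemma diff_end (a : nat -> {poly F}) (r : nat) (be bb : K) :
  (0 < r)%N -> (forall i, (0 < i)%N -> (1 < size (a i))%N) ->
  be != 0 -> 1 <= deg be -> bb != 0 -> 1 <= deg bb ->
  bpoly (a r) - bb != 0 -> le_deg (bpoly (a r) - bb)^-1 0 ->
  cfa (mkseq a r.+1) be - cfa (mkseq a r) (bpoly (a r) - bb) != 0 /\
  deg (cfa (mkseq a r.+1) be - cfa (mkseq a r) (bpoly (a r) - bb)) =
   deg bb - pdeg (a r) - deg (bpoly (a r) - bb) - 2 * \sum_(1 <= i < r) pdeg (a i).
Proof.
move=> hr nca hbz hbd1 hbbz hbbd hZ'z hZ'i.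
set Z' := bpoly (a r) - bb in hZ'z hZ'i *.
have hbi : le_deg be^-1 0 by apply: (le_deg_mono _ (le_degV hbz hbd1)); lia.
set Z := cfa [:: a r] be.
have ealZ : cfa (mkseq a r.+1) be = cfa (mkseq a r) Z by rewrite mkseqS -cats1 cfa_cat.
have hanc : nonconst [:: a r] by rewrite /= andbT; apply: nca.
have [hZz hZd] := cfa_nz hanc hbi.
rewrite -/Z in hZz hZd.
have hZi : le_deg Z^-1 0.
  apply: (le_deg_mono _ (le_degV hZz (lexx _))); rewrite hZd.
  have := pdeg_ge1 (nca _ hr); lia.
have [hZZz hZZd] : Z - Z' != 0 /\ deg (Z - Z') = deg bb.
  have -> : Z - Z' = bb + be^-1 by rewrite /Z /Z' /=; ring.
  apply: deg_addl => //.
  by apply: (le_deg_mono _ (le_degV hbz hbd1)); lia.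
have hZneq : Z != Z' by rewrite -subr_eq0.
have em : mkseq a r = a 0%N :: mkseq (fun i => a i.+1) r.-1 by rewrite -{1}(prednK hr) mkseqS0.
have hnc : nonconst (mkseq (fun i => a i.+1) r.-1).
  by apply/allP => x /mapP [i _ ->]; apply: nca.
have [d1 d2] := @cfa_diff _ (a 0%N) _ _ _ hnc hZz hZ'z hZneq hZi hZ'i.
rewrite -em -ealZ in d1 d2.
split => //; rewrite d2 hZZd hZd sum_mkseq_sh prednK //.
Qed.


End Gen.

Section Main.
Variable F : fieldType.
Local Notation K := (BLS F).
Variables (b : seq {poly F}) (tau f alpha alpha_s : LS F) (a : nat -> {poly F}) (r : nat).
Hypotheses (hs : (0 < size b)%N) (htb : ls_bounded tau) (htcf : is_cf (tau_word b) tau)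
  (hfb : ls_bounded f) (hfcf : is_cf a f)
  (hr : (0 < r)%N) (har : a r != bl b (size b))
  (hab : ls_bounded alpha) (hacf : is_cf (alpha_word a b r) alpha).

Let s := size b.
Let phi : K := BL hfb.
Let al : K := BL hab.
Let ta : K := BL htb.
Let aw := alpha_word a b r.

Lemma nc_a : nc a. Proof. by case: hfcf. Qed.
Lemma nc_aw : nc aw. Proof. by case: hacf. Qed.

Lemma bper_nc j : (1 < size (bper b j))%N.
Proof.
case: htcf => h _; case: j => [|j]; last by have := h j.+1 isT.
by have := h 1%N isT.
Qed.

Lemma nth_b_nc i : (i < s)%N -> (1 < size (nth 0%R b i))%N.
Proof. by move=> hi; have := bper_nc i.+1; rewrite /bper /= modn_small. Qed.

Lemma bl_nc j : (0 < j <= s)%N -> (1 < size (bl b j))%N.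
Proof. by move=> /andP [h1 h2]; apply: nth_b_nc; rewrite /s; lia. Qed.

Lemma bper_mod j : bper b (s + j.+1) = bper b j.+1.
Proof. by rewrite /bper addnS /= modnDl. Qed.

Lemma aw_le i : (i <= r)%N -> aw i = a i.
Proof. by move=> h; rewrite /aw /alpha_word h. Qed.

Lemma aw_gt j : aw (r + j.+1) = bper b j.+1.
Proof.
rewrite /aw /alpha_word; have -> : (r + j.+1 <= r)%N = false by lia.
by congr bper; lia.
Qed.

Lemma mkseq_aw t : (forall j, (1 <= j <= t)%N -> a (r + j) = bper b j) ->
  mkseq aw (r + t).+1 = mkseq a (r + t).+1.
Proof.
move=> h; rewrite /mkseq; apply/eq_in_map => i; rewrite mem_iota add0n => /andP [_ hi].
case: (leqP i r) => hir; first exact: aw_le.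
have -> : i = (r + (i - r - 1).+1)%N by lia.
rewrite aw_gt -h //; lia.
Qed.

Lemma pdeg_ge0 (p : {poly F}) : 0 <= pdeg p.
Proof. by rewrite /pdeg. Qed.

Lemma lemA t : (forall j, (1 <= j <= t)%N -> a (r + j) = bper b j) ->
  a (r + t).+1 != bper b t.+1 ->
  phi - al != 0 /\
  deg (phi - al) = pdeg (a (r + t).+1 - bper b t.+1) - pdeg (a (r + t).+1)
     - pdeg (bper b t.+1) - 2 * \sum_(1 <= i < (r + t).+1) pdeg (a i).
Proof.
move=> ht hne; set k := (r + t).+1.
have hmk := mkseq_aw ht.
have [F1 [hF1 eF1 hF2]] := @tails _ a phi k hfcf.
have [G1 [hG1 eG1 hG2]] := @tails _ aw al k hacf.
have [hF1z hF1d] := hF2 isT; have [hG1z hG1d] := hG2 isT.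
have awk : aw k = bper b t.+1 by rewrite /k -addnS aw_gt.
rewrite awk in hG1d.
have := tail hF1; set yF := (F1 - _)^-1 => [[f1 f2 f3 f4]].
have := tail hG1; set yG := (G1 - _)^-1 => [[g1 g2 g3 g4]].
have fk : shk a k 0 = a k by rewrite /shk addn0.
have gk : shk aw k 0 = bper b t.+1 by rewrite /shk addn0 awk.
rewrite fk in f4; rewrite gk in g4.
have hd1 : 1 <= deg yF by rewrite f2; apply: pdeg_ge1; apply: nc_a; lia.
have hd2 : 1 <= deg yG by rewrite g2; apply: pdeg_ge1; apply: nc_aw; lia.
have hp : a k - bper b t.+1 != 0 by rewrite subr_eq0.
have eFG : F1 - G1 = bpoly (a k - bper b t.+1) + (yF^-1 - yG^-1).
  by rewrite f4 g4 bpoly_sub; ring.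
have [hFG1 hFG2] : F1 - G1 != 0 /\ deg (F1 - G1) = pdeg (a k - bper b t.+1).
  rewrite eFG; have := @deg_addl _ (bpoly (a k - bper b t.+1)) (yF^-1 - yG^-1).
  rewrite bpoly_eq0 deg_bpoly // => /(_ hp); apply.
  apply: le_degB.
    apply: (le_deg_mono _ (le_degV f1 hd1)); have := pdeg_ge0 (a k - bper b t.+1); lia.
  apply: (le_deg_mono _ (le_degV g1 hd2)); have := pdeg_ge0 (a k - bper b t.+1); lia.
have hFG : F1 != G1 by rewrite -subr_eq0.
have hF1i : le_deg F1^-1 0.
  apply: (le_deg_mono _ (le_degV hF1z (lexx _))); rewrite hF1d.
  have := pdeg_ge1 (nc_a (isT : (0 < k)%N)); lia.
have hG1i : le_deg G1^-1 0.
  apply: (le_deg_mono _ (le_degV hG1z (lexx _))); rewrite hG1d.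
  have := bper_nc t.+1; move/pdeg_ge1; lia.
have el : mkseq a k = a 0%N :: mkseq (fun i => a i.+1) (r + t) by rewrite /k mkseqS0.
have hnc : nonconst (mkseq (fun i => a i.+1) (r + t)).
  by apply/allP => x /mapP [i _ ->]; apply: nc_a.
have := @cfa_diff _ (a 0%N) _ F1 G1 hnc hF1z hG1z hFG hF1i hG1i.
rewrite -el -eF1 -hmk -eG1 => [[d1 d2]]; split => //.
rewrite d2 hFG2 hF1d hG1d sum_mkseq_sh.
reflexivity.
Qed.


Definition pb := fun i => bper b i.+1.
Definition rb := fun i => nth 0 (rev b) (i %% s).

Lemma nc_all_b : nonconst b.
Proof. by apply/(all_nthP 0) => i hi; apply: nth_b_nc. Qed.

Lemma nc_pb : nc pb. Proof. by move=> i _; apply: bper_nc. Qed.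

Lemma rb_nc i : (1 < size (rb i))%N.
Proof.
have h := ltn_mod i (size b); rewrite hs in h.
rewrite /rb /s nth_rev // ; apply: nth_b_nc; rewrite /s; move: h; set m := (i %% size b)%N; move: hs; set n := size b; lia.
Qed.

Lemma nc_rb : nc rb. Proof. by move=> i _; apply: rb_nc. Qed.

Lemma beta_ex : exists be : K,
  [/\ is_cf pb (bval be), al = cfa (mkseq a r.+1) be, be != 0 & deg be = pdeg (bper b 1)].
Proof.
have [y [h1 h2 h3]] := @tails _ aw al r.+1 hacf.
have [hy1 hy2] := h3 isT.
exists y; split => //.
- by apply: is_cf_ext h1 => i; rewrite /shk /pb -aw_gt; congr aw; lia.
- rewrite h2 (_ : mkseq aw r.+1 = mkseq a r.+1) //; have := @mkseq_aw 0; rewrite addn0; apply => j; lia.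
- by rewrite hy2 -(aw_gt 0) addn1.
Qed.

Lemma beta_fix (be : K) : is_cf pb (bval be) -> be = cfa b be.
Proof.
move=> h; apply: per_fix h _ _.
- by move=> i; rewrite /pb -addnS; exact: bper_mod.
- apply: (eq_from_nth (x0 := 0)); rewrite size_mkseq // => i hi.
  by rewrite nth_mkseq // /pb /bper /= modn_small.
Qed.

Lemma betab_ex : exists bb : K, exists yb : K,
  [/\ bb = cfa (rev b) bb, bb = bpoly (bl b s) + yb^-1, yb != 0 & 1 <= deg yb].
Proof.
have [bb hbb] := cf_exists nc_rb.
have [h1 h2 h3 h4] := tail hbb.
exists bb, (bb - bpoly (rb 0))^-1; split => //.
- apply: per_fix hbb _ _.
  + by move=> i; rewrite /rb size_rev -/s modnDl.
  + apply: (eq_from_nth (x0 := 0)); rewrite size_mkseq ?size_rev // => i hi.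
    by rewrite nth_mkseq // /rb modn_small.
- rewrite {1}h4; congr (bpoly _ + _).
  rewrite /rb mod0n nth_rev // /bl /s; congr nth; move: hs; set n := size b; lia.
- by rewrite h2; apply: pdeg_ge1; apply: rb_nc.
Qed.

Hypothesis hgc : galois_conj alpha alpha_s.
Let als : K := BL (proj1 hgc).

Lemma notK_beta (be : K) (P P' Q Q' : {poly F}) :
  bpoly Q * be + bpoly Q' != 0 ->
  al = (bpoly P * be + bpoly P') / (bpoly Q * be + bpoly Q') ->
  forall P0 Q0 : {poly F}, Q0 != 0 -> be * bpoly Q0 != bpoly P0.
Proof.
move=> hD e P0 Q0 hQ0; apply/negP => /eqP hb.
case: hgc => _ [hK _]; apply: hK.
exists (P * P0 + P' * Q0), (Q * P0 + Q' * Q0); split.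
  rewrite -(bpoly_eq0 (F := F)) !(bpoly_add, bpoly_mul) -hb.
  have -> : bpoly Q * (be * bpoly Q0) + bpoly Q' * bpoly Q0 = (bpoly Q * be + bpoly Q') * bpoly Q0 by ring.
  by rewrite mulf_neq0 // bpoly_eq0.
change (bval (al * bpoly (Q * P0 + Q' * Q0)) = bval (bpoly (P * P0 + P' * Q0))).
congr bval; rewrite !(bpoly_add, bpoly_mul) -hb e.
move: hD; move: (bpoly P) (bpoly P') (bpoly Q) (bpoly Q') (bpoly Q0) => p0 p1 q0 q1 z hD.
by fieldp.
Qed.

Lemma lemB : al - als != 0 /\
  deg (al - als) = pdeg (bl b s) - pdeg (a r) - pdeg (a r - bl b s)
     - 2 * \sum_(1 <= i < r) pdeg (a i).
Proof.
have [be [hbcf eal hbz hbd]] := beta_ex.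
have hbfix := beta_fix hbcf.
have hbd1 : 1 <= deg be by rewrite hbd; apply: pdeg_ge1; apply: bper_nc.
have hbi : le_deg be^-1 0 by apply: (le_deg_mono _ (le_degV hbz hbd1)).
have [bb [yb [hbbfix hbbe hybz hybd]]] := betab_ex.
have hblnc : (1 < size (bl b s))%N.
  by apply: bl_nc; rewrite /s; move: hs; set n := size b; lia.
have hbsnc := pdeg_ge1 hblnc.
have hbsz := nc_nz hblnc.
have hyi : le_deg yb^-1 (-1) := le_degV hybz hybd.
have [hbbz hbbd] : bb != 0 /\ deg bb = pdeg (bl b s).
  rewrite hbbe; have := @deg_addl _ (bpoly (bl b s)) (yb^-1).
  rewrite bpoly_eq0 deg_bpoly // => /(_ hbsz); apply.
  by apply: (le_deg_mono _ hyi); lia.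
have hbbi : le_deg bb^-1 0.
  by apply: (le_deg_mono _ (le_degV hbbz (lexx _))); rewrite hbbd; lia.
set be' := - bb^-1.
have hbe'z : be' != 0 by rewrite oppr_eq0 invr_eq0.
have hrev : forall k, cfa (drop k b) be' = - (cfa (rev (take k b)) bb)^-1.
  move=> k; have e : bb = cfa (rev (drop k b)) (cfa (rev (take k b)) bb).
    by rewrite -cfa_cat -rev_cat cat_take_drop -hbbfix.
  by rewrite /be' {1}e cfa_rev.
have hfix' : be' = cfa b be' by rewrite -[in RHS](drop0 b) hrev take0.
have hdrop : forall k, (0 < k < size b)%N -> cfa (drop k b) be != 0.
  move=> k _; apply: cfa_nz0 => //; apply: (nonconst_sub nc_all_b).
  by move=> x; apply: mem_drop.
have hdrop' : forall k, (0 < k < size b)%N -> cfa (drop k b) be' != 0.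
  move=> k _; rewrite hrev oppr_eq0 invr_eq0; apply: cfa_nz0 => //.
  by apply: (nonconst_sub nc_all_b) => x; rewrite mem_rev; apply: mem_take.
have [D1z e1] := mob_eq hbz hdrop.
have [D2z e2] := mob_eq hbe'z hdrop'.
have q1 := fix_quad hbfix D1z e1.
have q2 := fix_quad hfix' D2z e2.
set L := mkseq a r.+1.
have hdropL : forall k, (0 < k < size L)%N -> cfa (drop k L) be != 0.
  move=> k /andP [hk _]; apply: cfa_nz0 => //; apply: nonconst_drop => //; exact: nc_a.
set Z' := bpoly (a r) - bb.
have hZ'e : cfa [:: a r] be' = Z' by rewrite /= /be' invrN invrK.
have [hZ'z hZ'd] : Z' != 0 /\ deg Z' = pdeg (a r - bl b s).
  have -> : Z' = bpoly (a r - bl b s) + (- yb^-1) by rewrite /Z' hbbe bpoly_sub; ring.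
  have hp : a r - bl b s != 0 by rewrite subr_eq0.
  have := @deg_addl _ (bpoly (a r - bl b s)) (- yb^-1).
  rewrite bpoly_eq0 deg_bpoly // => /(_ hp); apply.
  apply: le_degN; apply: (le_deg_mono _ hyi); have := pdeg_ge0 (a r - bl b s); lia.
have hZ'i : le_deg Z'^-1 0.
  have h0 : 0 <= deg Z' by rewrite hZ'd; apply: pdeg_ge0.
  by apply: (le_deg_mono _ (le_degV hZ'z h0)); rewrite oppr0.
have eL : L = mkseq a r ++ [:: a r] by rewrite /L mkseqS cats1.
have hdropL' : forall k, (0 < k < size L)%N -> cfa (drop k L) be' != 0.
  move=> k /andP [hk1 hk2]; rewrite /L size_mkseq in hk2.
  rewrite eL cats1 drop_rcons1 ?size_mkseq; last by lia.
  rewrite -cats1 cfa_cat hZ'e; apply: cfa_nz0 => //.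
  by apply: nonconst_drop => //; exact: nc_a.
have [DL1z eL1] := mob_eq hbz hdropL.
have [DL2z eL2] := mob_eq hbe'z hdropL'.
set al' := cfa L be'.
move: (hgc) => [_ [hnK [A [B [C [hA [eq1 eq2]]]]]]].
have eqa : bpoly A * (al * al) + bpoly B * al + bpoly C = 0 by apply: bls_eq.
have eqs : bpoly A * (al + als) + bpoly B = 0 by apply: bls_eq.
have eal' : al = (bpoly (m1 L) * be + bpoly (m2 L)) / (bpoly (m3 L) * be + bpoly (m4 L)).
  by rewrite eal.
have t1 := transport A B C DL1z eal'.
have t2 := transport A B C DL2z eL2.
set u2 := qu2 A B C (m1 L) (m2 L) (m3 L) (m4 L) in t1 t2.
set u1 := qu1 A B C (m1 L) (m2 L) (m3 L) (m4 L) in t1 t2.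
set u0 := qu0 A B C (m1 L) (m2 L) (m3 L) (m4 L) in t1 t2.
have hU : bpoly u2 * (be * be) + bpoly u1 * be + bpoly u0 = 0.
  move: t1; rewrite eqa => /esym /eqP; rewrite mulf_eq0 invr_eq0 mulf_eq0 (negbTE DL1z) /=.
  by rewrite orbF => /eqP.
set v2 := m3 b; set v1 := m4 b - m1 b; set v0 := - m2 b.
set w1 := v2 * u1 - u2 * v1; set w0 := v2 * u0 - u2 * v0.
have hw : bpoly w1 * be + bpoly w0 = 0.
  transitivity (bpoly v2 * (bpoly u2 * (be * be) + bpoly u1 * be + bpoly u0)
     - bpoly u2 * (bpoly v2 * (be * be) + bpoly v1 * be + bpoly v0)).
    by rewrite /w1 /w0 !(bpoly_sub, bpoly_mul); ring.
  by rewrite hU q1 !mulr0 subrr.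
have hw1 : w1 = 0.
  apply/eqP; apply: contraT => hw1.
  have := notK_beta DL1z eal' (- w0) hw1; rewrite bpoly_opp.
  have -> : be * bpoly w1 = - bpoly w0.
    by apply/eqP; rewrite -subr_eq0 opprK mulrC hw.
  by rewrite eqxx.
have hw0 : bpoly w0 = 0 by move: hw; rewrite hw1 bpoly0 mul0r add0r.
have hU' : bpoly u2 * (be' * be') + bpoly u1 * be' + bpoly u0 = 0.
  have hv2 : bpoly v2 != 0 by rewrite bpoly_eq0; apply: m3_nz; [exact: nc_all_b|by case: (b) hs].
  apply/eqP; rewrite -(mulrI_eq0 _ (lregP hv2)); apply/eqP.
  transitivity (bpoly u2 * (bpoly v2 * (be' * be') + bpoly v1 * be' + bpoly v0)
     + (bpoly w1 * be' + bpoly w0)).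
    by rewrite /w1 /w0 !(bpoly_sub, bpoly_mul); ring.
  by rewrite q2 hw1 bpoly0 hw0 mulr0 mul0r !addr0.
have eqa' : bpoly A * (al' * al') + bpoly B * al' + bpoly C = 0.
  by rewrite t2 hU' mul0r.
have eal'Z : al' = cfa (mkseq a r) Z' by rewrite /al' eL cfa_cat hZ'e.
have hbbd1 : 1 <= deg bb by rewrite hbbd.
have [d1 d2] := diff_end hr nc_a hbz hbd1 hbbz hbbd1 hZ'z hZ'i.
rewrite -/Z' -eal -eal'Z in d1 d2.
have hals : als = al'.
  apply: (vieta hA _ eqa eqa' eqs); by rewrite -subr_eq0.
by rewrite hals; split => //; rewrite d2 hbbd hZ'd.
Qed.

End Main.

Section Fin.
Variable F : fieldType.
Local Notation K := (BLS F).

Lemma size_sign_poly n : size ((-1) ^+ n : {poly F}) = 1%N.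
Proof.
rewrite -signr_odd; case: (odd n); rewrite ?expr1 ?expr0 ?size_polyN size_poly1 //.
Qed.

Variables (b : seq {poly F}) (tau f alpha alpha_s : LS F) (a : nat -> {poly F}) (r : nat).
Hypotheses (hs : (0 < size b)%N) (htb : ls_bounded tau) (htcf : is_cf (tau_word b) tau)
  (hfb : ls_bounded f) (hfcf : is_cf a f)
  (hr : (0 < r)%N) (har : a r != bl b (size b))
  (hab : ls_bounded alpha) (hacf : is_cf (alpha_word a b r) alpha).

Let phi : K := BL hfb.
Let al : K := BL hab.
Let ta : K := BL htb.

Lemma theta_alpha : in_Theta tau alpha.
Proof.
have [be [hbcf eal hbz hbd]] := beta_ex hs hr har hab hacf.
have hbd1 : 1 <= deg be by rewrite hbd; apply: pdeg_ge1; apply: (bper_nc htcf).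
have hbi : le_deg be^-1 0 by apply: (le_deg_mono _ (le_degV hbz hbd1)).
have := @tail _ (tau_word b) ta htcf; set y := (ta - _)^-1 => [[y1 y2 y3 y4]].
have hy : is_cf (pb b) (bval y).
  by apply: is_cf_ext y3 => i; rewrite /shc /pb /tau_word.
have eyb := is_cf_uniqK hy hbcf.
have eta : ta = be^-1.
  by rewrite y4 -eyb /tau_word /= bpoly0 add0r.
set L := mkseq a r.+1.
have hdropL : forall k, (0 < k < size L)%N -> cfa (drop k L) be != 0.
  move=> k /andP [hk _]; apply: cfa_nz0 => //; apply: nonconst_drop => //.
  exact: (nc_a hfcf).
have [hD e] := mob_eq hbz hdropL.
have hta : ta != 0 by rewrite eta invr_eq0.
exists tau; split; first by left.
exists (m2 L), (m1 L), (m4 L), (m3 L); split.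
  have := mob_det L; move/(congr1 (fun p => - p)); rewrite opprB => ->.
  by rewrite size_polyN size_sign_poly.
have hD' : bpoly (m4 L) * ta + bpoly (m3 L) != 0.
  have -> : bpoly (m4 L) * ta + bpoly (m3 L) = ta * (bpoly (m3 L) * be + bpoly (m4 L)).
    by rewrite eta; move: hD; move: (bpoly (m3 L)) (bpoly (m4 L)) => u v hD; fieldp.
  by rewrite mulf_neq0.
split.
  move=> h; move/eqP: hD'; apply; apply: bls_eq; exact: h.
change (bval al = bval ((bpoly (m2 L) * ta + bpoly (m1 L)) * (bpoly (m4 L) * ta + bpoly (m3 L))^-1)).
congr bval; rewrite /al eal e.
move: hD hD'; rewrite eta; move: (bpoly (m1 L)) (bpoly (m2 L)) (bpoly (m3 L)) (bpoly (m4 L)) => u1 u2 u3 u4 hD hD'.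
by field; rewrite hbz addrC hD.
Qed.

Lemma modS_cases (u m : nat) : (0 < m)%N ->
  (u.+1 %% m = if ((u %% m).+1 < m)%N then (u %% m).+1 else 0)%N.
Proof.
move=> hm; rewrite -addn1 -modnDml addn1; case: ifP => h.
  by rewrite modn_small.
have h2 := ltn_pmod u hm.
have -> : (u %% m).+1 = m by move: h h2; set v := (u %% m)%N; lia.
by rewrite modnn.
Qed.

Lemma bper_sprime t : (0 < t)%N -> bper b t.+1 = bl b (sprime (size b) t).
Proof.
move=> ht; rewrite /bper /bl /sprime /=.
rewrite -{1}(prednK ht) modS_cases //; case: ifP => h //.
Qed.

Lemma sprime_range t : (0 < sprime (size b) t <= size b)%N.
Proof.
rewrite /sprime; case: ifP => h; move: h hs; set u := ((t.-1 %% size b).+1)%N;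
  set m := size b; lia.
Qed.

Lemma pair_ge1 (p q : {poly F}) : (1 < size p)%N -> (1 < size q)%N -> p != q ->
  1 <= pdeg p + pdeg q - pdeg (p - q).
Proof.
move=> hp hq hpq.
have h := size_polyD p (- q); rewrite size_polyN in h.
rewrite /pdeg; move: hp hq h; set x := size p; set y := size q; set z := size (p - q).
lia.
Qed.

Lemma min_eq (p q : {poly F}) : pdeg p != pdeg q ->
  pdeg p + pdeg q - pdeg (p - q) = Num.min (pdeg p) (pdeg q).
Proof.
rewrite /pdeg minEle => hne.
have [h|h] : (size q < size p)%N \/ (size p < size q)%N.
  move: hne; set x := size p; set y := size q; lia.
- have e : size (p - q) = size p by rewrite size_polyDl // size_polyN.
  rewrite e; move: h; set x := size p; set y := size q; case: ifP; lia.
- have e : size (p - q) = size q.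
    by rewrite addrC size_polyDl size_polyN.
  rewrite e; move: h; set x := size p; set y := size q; case: ifP; lia.
Qed.

Lemma sum_split (g : nat -> int) t :
  \sum_(1 <= i < (r + t).+1) g i = \sum_(1 <= i < r) g i + g r + \sum_(1 <= j < t.+1) g (r + j)%N.
Proof.
rewrite (big_cat_nat _ (n := r)) //=; last by lia.
rewrite (big_ltn (m := r)) //=; last by lia.
rewrite addrA; congr (_ + _).
have -> : r.+1 = (1 + r)%N by lia.
rewrite big_addn; have -> : ((r + t).+1 - r = t.+1)%N by lia.
by apply: eq_bigr => i _; rewrite addnC.
Qed.

Hypothesis hgc : galois_conj alpha alpha_s.
Let als : K := BL (proj1 hgc).

Lemma formG t : (forall j, (1 <= j <= t)%N -> a (r + j)%N = bper b j) ->
  a (r + t).+1 != bper b t.+1 ->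
  ls_deg (ls_sub alpha alpha_s) - ls_deg (ls_sub f alpha) =
  2 * \sum_(1 <= j < t.+1) pdeg (a (r + j)%N) + pdeg (a r) + pdeg (bl b (size b))
   - pdeg (a r - bl b (size b)) + pdeg (a (r + t).+1) + pdeg (bper b t.+1)
   - pdeg (a (r + t).+1 - bper b t.+1).
Proof.
move=> h1 h2.
have -> : ls_deg (ls_sub alpha alpha_s) = deg (al - als) by [].
have -> : ls_deg (ls_sub f alpha) = deg (phi - al) by [].
have [_ hB] := lemB hs htcf hfcf hr har hab hacf hgc.
have [_ hA] := lemA hs htcf hfb hfcf hr har hab hacf h1 h2.
rewrite /al /als /phi hB hA sum_split; ring.
Qed.

Lemma arith2 (S A B C D E G : int) : 1 <= A + B - C -> 1 <= D + E - G -> 0 <= S ->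
  2 <= 2 * S + A + B - C + D + E - G.
Proof. lia. Qed.

Lemma arith1 (A B C D E G : int) : 1 <= A + B - C -> 1 <= D + E - G ->
  2 <= A + B - C + D + E - G.
Proof. lia. Qed.

Lemma bper1 : bper b 1 = bl b 1.
Proof. by rewrite /bper /bl /= mod0n. Qed.

Lemma part_i : a r.+1 != bl b 1 ->
  ls_deg (ls_sub alpha alpha_s) - ls_deg (ls_sub f alpha) =
  pdeg (a r) + pdeg (bl b (size b)) - pdeg (a r - bl b (size b))
  + pdeg (a r.+1) + pdeg (bl b 1) - pdeg (a r.+1 - bl b 1).
Proof.
move=> h; have := @formG 0%N; rewrite addn0 bper1 big_geq // mulr0 add0r.
apply => //; move=> j; lia.
Qed.

Lemma part_ii t : a r.+1 = bl b 1 ->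
  (forall j, (1 <= j <= t)%N -> a (r + j)%N = bper b j) ->
  a (r + t).+1 != bper b t.+1 ->
  ls_deg (ls_sub alpha alpha_s) - ls_deg (ls_sub f alpha) =
  2 * \sum_(1 <= j < t.+1) pdeg (a (r + j)%N) + pdeg (a r) + pdeg (bl b (size b))
   - pdeg (a r - bl b (size b)) + pdeg (a (r + t).+1) + pdeg (bl b (sprime (size b) t))
   - pdeg (a (r + t).+1 - bl b (sprime (size b) t)).
Proof.
move=> h1 h2 h3.
have ht : (0 < t)%N.
  case: t h2 h3 => // _; rewrite addn0 h1 bper1 eqxx //.
by rewrite -bper_sprime // (formG h2 h3).
Qed.

Lemma sum_ge0' t : 0 <= \sum_(1 <= j < t.+1) pdeg (a (r + j)%N).
Proof. apply: (big_ind (fun x : int => 0 <= x)) => //; first by move=> x y hx hy; apply: addr_ge0. Qed.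

Hypothesis hfT : ~ in_Theta tau f.

Lemma ex_t : exists t, (forall j, (1 <= j <= t)%N -> a (r + j)%N = bper b j) /\
  a (r + t).+1 != bper b t.+1.
Proof.
apply: NNPP => hn.
have all : forall n j, (1 <= j <= n)%N -> a (r + j)%N = bper b j.
  elim=> [|n IH] j hj; first lia.
  case: (eqVneq j n.+1) => [->|hne]; last by apply: IH; lia.
  apply/eqP; apply: contraT => hne'; exfalso; apply: hn; exists n; split => //.
  by rewrite -addnS.
have eqw : forall i, alpha_word a b r i = a i.
  move=> i; rewrite /alpha_word; case: ifP => // h.
  rewrite -(all (i - r)%N (i - r)%N); last lia.
  by congr a; lia.
have hcf' : is_cf a alpha := is_cf_ext eqw hacf.
have e : f = alpha by apply: funext; apply: is_cf_uniq hfcf hcf'.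
by apply: hfT; rewrite e; exact: theta_alpha.
Qed.

Lemma final_all :
  let L := ls_deg (ls_sub alpha alpha_s) - ls_deg (ls_sub f alpha) in
  let s := size b in
  (a r.+1 != bl b 1 ->
     L = pdeg (a r) + pdeg (bl b s) - pdeg (a r - bl b s)
         + pdeg (a r.+1) + pdeg (bl b 1) - pdeg (a r.+1 - bl b 1)) /\
  (forall t : nat, a r.+1 = bl b 1 ->
     (forall j : nat, (1 <= j <= t)%N -> a (r + j)%N = bper b j) ->
     a (r + t).+1 != bper b t.+1 ->
     L = 2 * (\sum_(1 <= j < t.+1) pdeg (a (r + j)%N))
         + pdeg (a r) + pdeg (bl b s) - pdeg (a r - bl b s)
         + pdeg (a (r + t).+1) + pdeg (bl b (sprime s t))
         - pdeg (a (r + t).+1 - bl b (sprime s t))) /\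
  2 <= L /\
  (forall t s' : nat,
     ((a r.+1 != bl b 1 /\ t = 0%N /\ s' = 1%N) \/
      (a r.+1 = bl b 1 /\ (forall j : nat, (1 <= j <= t)%N -> a (r + j)%N = bper b j) /\
       a (r + t).+1 != bper b t.+1 /\ s' = sprime s t)) ->
     pdeg (a r) != pdeg (bl b s) ->
     pdeg (a (r + t).+1) != pdeg (bl b s') ->
     L = 2 * (\sum_(1 <= j < t.+1) pdeg (a (r + j)%N))
         + Num.min (pdeg (a r)) (pdeg (bl b s))
         + Num.min (pdeg (a (r + t).+1)) (pdeg (bl b s'))).
Proof.
move=> L s; rewrite /L /s.
have hncr : (1 < size (a r))%N by apply: (nc_a hfcf).
have hbs : (1 < size (bl b (size b)))%N.
  by apply: (bl_nc hs htcf hr har); move: hs; set m := size b; lia.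
have X1 := pair_ge1 hncr hbs har.
split; first exact: part_i.
split; first by move=> t h1 h2 h3; apply: part_ii.
split.
  case: (eqVneq (a r.+1) (bl b 1)) => h.
    have [t [h1 h2]] := ex_t.
    rewrite (part_ii h h1 h2).
    have ht : (0 < t)%N.
      by case: t h1 h2 => // _; rewrite addn0 h bper1 eqxx.
    have hs' := sprime_range t.
    have hne : a (r + t).+1 != bl b (sprime (size b) t) by rewrite -bper_sprime.
    have X2 := pair_ge1 (nc_a hfcf (isT : (0 < (r + t).+1)%N)) (bl_nc hs htcf hr har hs') hne.
    have X3 := sum_ge0' t.
    exact: arith2.
  rewrite (part_i h).
  have h1s : (0 < 1 <= size b)%N by move: hs; set m := size b; lia.
  have X2 := pair_ge1 (nc_a hfcf (isT : (0 < r.+1)%N)) (bl_nc hs htcf hr har h1s) h.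
  exact: arith1.
move=> t s' [[h1 [-> ->]]|[h1 [h2 [h3 ->]]]] hd1 hd2.
  rewrite addn0 in hd2 *.
  rewrite (part_i h1) big_geq // mulr0 add0r -(min_eq hd1) -(min_eq hd2); ring.
rewrite (part_ii h1 h2 h3) -(min_eq hd1) -(min_eq hd2); ring.
Qed.

End Fin.

Unset Implicit Arguments.
Set Strict Implicit.
Set Printing Implicit Defensive.

Theorem corollary2p4 (F : finFieldType) (b : seq {poly F}) (tau : LS F)
    (a : nat -> {poly F}) (f : LS F) (r : nat) (alpha alpha_s : LS F) :
  (0 < size b)%N ->
  (forall d : nat, (0 < d < size b)%N -> exists j : nat, bper b j.+1 != bper b (j.+1 + d)) ->
  ls_bounded tau -> is_cf (tau_word b) tau ->
  ls_bounded f -> is_cf a f -> ~ ls_in_K f -> ~ in_Theta tau f ->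
  (0 < r)%N -> a r != bl b (size b) ->
  ls_bounded alpha -> is_cf (alpha_word a b r) alpha -> galois_conj alpha alpha_s ->
  let L := ls_deg (ls_sub alpha alpha_s) - ls_deg (ls_sub f alpha) in
  let s := size b in
  (a r.+1 != bl b 1 ->
     L = pdeg (a r) + pdeg (bl b s) - pdeg (a r - bl b s)
         + pdeg (a r.+1) + pdeg (bl b 1) - pdeg (a r.+1 - bl b 1)) /\
  (forall t : nat, a r.+1 = bl b 1 ->
     (forall j : nat, (1 <= j <= t)%N -> a (r + j)%N = bper b j) ->
     a (r + t).+1 != bper b t.+1 ->
     L = 2 * (\sum_(1 <= j < t.+1) pdeg (a (r + j)%N))
         + pdeg (a r) + pdeg (bl b s) - pdeg (a r - bl b s)
         + pdeg (a (r + t).+1) + pdeg (bl b (sprime s t))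
         - pdeg (a (r + t).+1 - bl b (sprime s t))) /\
  2 <= L /\
  (forall t s' : nat,
     ((a r.+1 != bl b 1 /\ t = 0%N /\ s' = 1%N) \/
      (a r.+1 = bl b 1 /\ (forall j : nat, (1 <= j <= t)%N -> a (r + j)%N = bper b j) /\
       a (r + t).+1 != bper b t.+1 /\ s' = sprime s t)) ->
     pdeg (a r) != pdeg (bl b s) ->
     pdeg (a (r + t).+1) != pdeg (bl b s') ->
     L = 2 * (\sum_(1 <= j < t.+1) pdeg (a (r + j)%N))
         + Num.min (pdeg (a r)) (pdeg (bl b s))
         + Num.min (pdeg (a (r + t).+1)) (pdeg (bl b s'))).
Proof.
move=> hs hper htb htcf hfb hfcf hfK hfT hr har hab hacf hgc.
exact: (final_all hs htb htcf hfb hfcf hr har hab hacf hgc hfT).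
Qed.
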